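(* Let $p>5$ be a prime, $q=p^h$, and let $\mathcal{F}$ be the projective closure of the affine curve $ax^n+by^m=1$ defined over $\mathbb{F}_q$, where $a,b\in\mathbb{F}_q^*$ and $m,n$ are positive integers with $n\ge m>2$ and $p\nmid mn$. Then $\mathcal{F}$ is nonclassical with respect to the linear system $\Sigma_2$ of conics if and only if one of the following holds: (a) $p\mid (m-2)$ and $p\mid (n-2)$; (b) $p\mid (m+1)$ and $p\mid (n+1)$; (c) $p\mid (2m-1)$ and $p\mid (2n-1)$; (d) $p\mid (m-1)$ and $p\mid (n-1)(n-2)(2n-1)(n+1)$; (e) $p\mid (n-1)$ and $p\mid (m+1)(m-2)(2m-1)$.
   Context: For a geometrically irreducible projective plane curve $\mathcal{F}$ over $\mathbb{F}_q$ with function field $\overline{\mathbb{F}}_q(\mathcal{F})=\overline{\mathbb{F}}_q(x,y)$ and an integer $s\ge1$, let $\Sigma_s$ be the linear system of plane curves of degree $s$, $M=\binom{s+2}{2}-1$, and $\varphi_0,\dots,\varphi_M$ the monomials of degree $s$ in $x,y,1$. For a separating element $\tau$ and Hasse derivatives $D^{(k)}_\tau$, the order sequence $\varepsilon_0<\dots<\varepsilon_M$ of $\mathcal{F}$ with respect to $\Sigma_s$ is the lexicographically smallest sequence of nonnegative integers with $\det(D_\tau^{(\varepsilon_i)}\varphi_j)_{i,j=0}^M\neq0$. $\mathcal{F}$ is classical with respect to $\Sigma_s$ if $\varepsilon_i=i$ for all $i$, and nonclassical otherwise. $\Sigma_2$ is the system of conics. *)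

(* Defs.v *)
From HB Require Import structures.
From mathcomp Require Import all_boot all_order all_algebra.
Set Implicit Arguments. Unset Strict Implicit. Unset Printing Implicit Defensive.
Import GRing.Theory.
Local Open Scope ring_scope.

(* L plays the role of an algebraic closure of F_p (= algebraic closure of F_q):
   algebraically closed, of characteristic p, and algebraic over F_p. *)
Definition is_alg_closure_Fp (p : nat) (L : closedFieldType) : Prop :=
  p \in [pchar L] /\ (forall z : L, exists2 k : nat, (0 < k)%N & z ^+ (p ^ k) = z).

(* evaluation of a bivariate polynomial P(X,Y) in {poly {poly L}} at (x,y) in K
   (the inner variable is X, the outer one Y) *)
Definition ev2 (L : nzRingType) (K : nzRingType) (iota : L -> K) (x y : K)
  (P : {poly {poly L}}) : K :=
  (map_poly (fun r : {poly L} => (map_poly iota r).[x]) P).[y].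

(* K (an extension of L via iota) is the function field Lbar(x,y) of the curve
   a X^n + b Y^m = 1: x is transcendental over L, the relation holds, and
   K is generated as a field over L by x and y. *)
Definition is_function_field_ab (L : closedFieldType) (K : fieldType)
  (iota : {rmorphism L -> K}) (a b : L) (m n : nat) (x y : K) : Prop :=
  [/\ (forall P : {poly L}, P != 0 -> (map_poly iota P).[x] != 0),
      iota a * x ^+ n + iota b * y ^+ m = 1 &
      (forall z : K, exists P Q : {poly {poly L}},
          ev2 iota x y Q != 0 /\ z = ev2 iota x y P / ev2 iota x y Q)].

(* D = (D^(k))_k is the (iterative) Hasse derivation of K with respect to the
   separating element t, trivial on the constants iota L. *)
Definition is_hasse_deriv (L : closedFieldType) (K : fieldType)
  (iota : {rmorphism L -> K}) (t : K) (D : nat -> K -> K) : Prop :=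
  (forall z, D 0%N z = z) /\
  (forall k z w, D k (z + w) = D k z + D k w) /\
  (forall k z w, D k (z * w) = \sum_(i < k.+1) D i z * D (k - i)%N w) /\
  (forall k c, (0 < k)%N -> D k (iota c) = 0) /\
  D 1%N t = 1 /\
  (forall k, (1 < k)%N -> D k t = 0) /\
  (forall i j z, D i (D j z) = ('C(i + j, i))%:R * D (i + j)%N z).

Definition hasse_wdet (K : fieldType) (M : nat) (D : nat -> K -> K)
  (eps : 'I_M.+1 -> nat) (phi : 'I_M.+1 -> K) : K :=
  \det (\matrix_(i < M.+1, j < M.+1) D (eps i) (phi j)).

Definition lex_le (M : nat) (e e' : 'I_M.+1 -> nat) : Prop :=
  e = e' \/ exists k : 'I_M.+1,
    (forall i : 'I_M.+1, (i < k)%N -> e i = e' i) /\ (e k < e' k)%N.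

Definition strictly_incr (M : nat) (e : 'I_M.+1 -> nat) : Prop :=
  forall i j : 'I_M.+1, (i < j)%N -> (e i < e j)%N.

Definition is_order_sequence (K : fieldType) (M : nat) (D : nat -> K -> K)
  (phi : 'I_M.+1 -> K) (eps : 'I_M.+1 -> nat) : Prop :=
  [/\ strictly_incr eps, hasse_wdet D eps phi != 0 &
      forall eps', strictly_incr eps' -> hasse_wdet D eps' phi != 0 ->
        lex_le eps eps'].

Definition conic_monomials (K : fieldType) (x y : K) : 'I_6 -> K :=
  fun j => nth 0 [:: 1; x; y; x ^+ 2; x * y; y ^+ 2] j.

Definition classical_conics (K : fieldType) (D : nat -> K -> K) (x y : K) : Prop :=
  is_order_sequence D (conic_monomials x y) (fun i : 'I_6 => nat_of_ord i).

Definition nonclassical_conics (K : fieldType) (D : nat -> K -> K) (x y : K) : Prop :=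
  ~ classical_conics D x y.

(* Main.v *)
Require Import Defs.
From HB Require Import structures.
From mathcomp Require Import all_boot all_order all_algebra.
From mathcomp Require Import ring zify.
From Stdlib Require Import FunctionalExtensionality.
Import GRing.Theory.
Local Open Scope ring_scope.
Set Implicit Arguments. Unset Strict Implicit.

Lemma hD0 (L : closedFieldType) (K : fieldType) (iota : {rmorphism L -> K}) (x : K) D
  (HD : is_hasse_deriv iota x D) k z : D k 0 = 0 /\ D k (- z) = - D k z.
Proof.
case: HD => _ [Hadd _].
have h0 : D k 0 = 0.
  by apply: (@addrI _ (D k 0)); rewrite addr0 -Hadd addr0.
split=> //; apply: (@addrI _ (D k z)); by rewrite -Hadd !subrr.
Qed.

Lemma dadd L K iota x D (HD : @is_hasse_deriv L K iota x D) z w :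
  D 1%N (z + w) = D 1%N z + D 1%N w.
Proof. by case: HD => _ [->]. Qed.
Lemma dopp L K iota x D (HD : @is_hasse_deriv L K iota x D) z :
  D 1%N (- z) = - D 1%N z.
Proof. by case: (hD0 HD 1 z). Qed.
Lemma dmul L K iota x D (HD : @is_hasse_deriv L K iota x D) z w :
  D 1%N (z * w) = z * D 1%N w + D 1%N z * w.
Proof.
case: HD => H0 [_ [Hm _]].
by rewrite Hm !big_ord_recr big_ord0 /= add0r !H0.
Qed.
Lemma dnat L K iota x D (HD : @is_hasse_deriv L K iota x D) k :
  D 1%N (k%:R) = 0.
Proof. case: HD => _ [_ [_ [Hc _]]]. by rewrite -(rmorph_nat iota) Hc. Qed.
Lemma d1 L K iota x D (HD : @is_hasse_deriv L K iota x D) :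
  D 1%N 1 = 0.
Proof. case: HD => _ [_ [_ [Hc _]]]. by rewrite -(rmorph1 iota) Hc. Qed.
Lemma diota L K iota x D (HD : @is_hasse_deriv L K iota x D) c :
  D 1%N (iota c) = 0.
Proof. by case: HD => _ [_ [_ [Hc _]]]; rewrite Hc. Qed.
Lemma dexp L K iota x D (HD : @is_hasse_deriv L K iota x D) z j :
  D 1%N (z ^+ j) = j%:R * z ^+ j.-1 * D 1%N z.
Proof.
elim: j => [|j IH]; first by rewrite expr0 (d1 HD) !mul0r.
rewrite exprS (dmul HD) IH; case: j IH => [|j] _; first by rewrite /= !expr0; ring.
rewrite /= exprS; rewrite -[(j.+2)%:R]natr1 -[(j.+1)%:R]natr1. ring.
Qed.
Lemma diter L K iota x D (HD : @is_hasse_deriv L K iota x D) k z :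
  D 1%N (D k z) = (k.+1)%:R * D k.+1 z.
Proof.
case: HD => _ [_ [_ [_ [_ [_ Hit]]]]]. by rewrite Hit add1n bin1.
Qed.

Lemma dx L K iota x D (HD : @is_hasse_deriv L K iota x D) : D 1%N x = 1.
Proof. by case: HD => _ [_ [_ [_ [-> _]]]]. Qed.

Lemma d0 L K iota x D (HD : @is_hasse_deriv L K iota x D) k : D k 0 = 0.
Proof. by case: (hD0 HD k 0). Qed.

Ltac dsimp HD := rewrite ?(d0 HD, dexp HD, dnat HD, d1 HD, diota HD, dx HD, dadd HD, dopp HD, dmul HD).

Definition Af (K : fieldType) (x s M : K) k := x ^+ k * s ^+ k * M ^+ k * (k`!)%:R.



Lemma dt_x L K iota x D (HD : @is_hasse_deriv L K iota x D) (a : L) n :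
  (0 < n)%N -> x * D 1%N (iota a * x ^+ n) = n%:R * (iota a * x ^+ n).
Proof.
move=> n0; dsimp HD; case: n n0 => // n _ /=; rewrite exprS; ring.
Qed.

Lemma dA L K iota x D (HD : @is_hasse_deriv L K iota x D) (t : K) (m : nat) k :
  x * (1 - t) * D 1%N (Af x (1 - t) m%:R k) =
  k%:R * ((1 - t) - x * D 1%N t) * Af x (1 - t) m%:R k.
Proof.
rewrite /Af; dsimp HD; case: k => [|k] /=; first ring.
rewrite !exprS. ring.
Qed.

Lemma F2 L K iota x D (HD : @is_hasse_deriv L K iota x D) (a b : L) (m n : nat) (y : K) :
  (0 < m)%N -> (0 < n)%N -> iota a * x ^+ n + iota b * y ^+ m = 1 ->
  x * (1 - iota a * x ^+ n) * m%:R * D 1%N y = - (n%:R * (iota a * x ^+ n) * y).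
Proof.
move=> m0 n0 rel.
have Hd : D 1%N (iota a * x ^+ n + iota b * y ^+ m) = 0 by rewrite rel (d1 HD).
move: Hd; dsimp HD => Hd.
have E : iota b * (m%:R * y ^+ m.-1 * D 1%N y) = - (iota a * (n%:R * x ^+ n.-1)).
  apply/eqP; rewrite -subr_eq0 opprK; apply/eqP; rewrite -Hd; ring.
have -> : 1 - iota a * x ^+ n = iota b * y ^+ m by rewrite -rel; ring.
case: m m0 E {rel Hd} => // m _ /= E; case: n n0 E => // n _ /= E.
rewrite !exprS.
transitivity (x * y * (iota b * (m.+1%:R * y ^+ m * D 1%N y))); first ring.
rewrite E; ring.
Qed.

Lemma step L K iota x D (HD : @is_hasse_deriv L K iota x D) (t : K) (m n k : nat)
  (y fk fk' fk1 : K) :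
  x * D 1%N t = n%:R * t ->
  x * (1 - t) * m%:R * D 1%N y = - (n%:R * t * y) ->
  Af x (1 - t) m%:R k * D k y = y * fk ->
  D 1%N fk = fk' * D 1%N t ->
  fk1 = - n%:R * t * fk + n%:R * m%:R * t * (1 - t) * fk'
        - k%:R * m%:R * ((1 - t) - n%:R * t) * fk ->
  Af x (1 - t) m%:R k.+1 * D k.+1 y = y * fk1.
Proof.
move=> Hxt HF2 Ek Hf Hfk1.
have E := congr1 (D 1%N) Ek.
rewrite (dmul HD _ (D k y)) (dmul HD y) (diter HD) in E.
have AS : Af x (1 - t) m%:R k.+1 = Af x (1 - t) m%:R k * (x * (1 - t) * m%:R * k.+1%:R).
  by rewrite /Af factS natrM !exprS; ring.
rewrite AS.
transitivity (x * (1 - t) * m%:R * (Af x (1 - t) m%:R k * (k.+1%:R * D k.+1 y))); first ring.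
have -> : Af x (1 - t) m%:R k * (k.+1%:R * D k.+1 y) =
   y * D 1%N fk + D 1%N y * fk - D 1%N (Af x (1 - t) m%:R k) * D k y.
  by rewrite -E addrK.
transitivity (y * (1 - t) * m%:R * fk' * (x * D 1%N t) + fk * (x * (1 - t) * m%:R * D 1%N y)
   - m%:R * D k y * (x * (1 - t) * D 1%N (Af x (1 - t) m%:R k))).
  by rewrite Hf; ring.
rewrite (dA HD) Hxt HF2.
transitivity (y * (1 - t) * m%:R * fk' * (n%:R * t) + fk * (- (n%:R * t * y))
   - m%:R * k%:R * ((1 - t) - n%:R * t) * (Af x (1 - t) m%:R k * D k y)); first ring.
rewrite Ek Hfk1; ring.
Qed.
Definition P5 (K : fieldType) (c1 c2 c3 c4 c5 t : K) : K :=
  c1 * t + c2 * t ^+ 2 + c3 * t ^+ 3 + c4 * t ^+ 4 + c5 * t ^+ 5.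
Definition P5' (K : fieldType) (c1 c2 c3 c4 c5 t : K) : K :=
  c1 + 2%:R * c2 * t + 3%:R * c3 * t ^+ 2 + 4%:R * c4 * t ^+ 3 + 5%:R * c5 * t ^+ 4.

Lemma dP5 L K iota x D (HD : @is_hasse_deriv L K iota x D) (c1 c2 c3 c4 c5 t : K) :
  D 1%N c1 = 0 -> D 1%N c2 = 0 -> D 1%N c3 = 0 -> D 1%N c4 = 0 -> D 1%N c5 = 0 ->
  D 1%N (P5 c1 c2 c3 c4 c5 t) = P5' c1 c2 c3 c4 c5 t * D 1%N t.
Proof.
move=> h1 h2 h3 h4 h5; rewrite /P5 /P5' !(dadd HD) !(dmul HD) h1 h2 h3 h4 h5.
ring.
Qed.

Definition f1 (K : fieldType) (M N t : K) : K := P5 (- N) 0 0 0 0 t.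
Definition f1' (K : fieldType) (M N t : K) : K := P5' (- N) 0 0 0 0 t.
Lemma f1c (K : fieldType) (M N t : K) : f1 M N t = P5 (- N) 0 0 0 0 t. Proof. by []. Qed.
Lemma f1'c (K : fieldType) (M N t : K) : f1' M N t = P5' (- N) 0 0 0 0 t. Proof. by []. Qed.
Definition f2 (K : fieldType) (M N t : K) : K := P5 (M * N - M * N ^+ 2) (N ^+ 2 - M * N) 0 0 0 t.
Definition f2' (K : fieldType) (M N t : K) : K := P5' (M * N - M * N ^+ 2) (N ^+ 2 - M * N) 0 0 0 t.
Lemma f2c (K : fieldType) (M N t : K) : f2 M N t = P5 (M * N - M * N ^+ 2) (N ^+ 2 - M * N) 0 0 0 t. Proof. by []. Qed.
Lemma f2'c (K : fieldType) (M N t : K) : f2' M N t = P5' (M * N - M * N ^+ 2) (N ^+ 2 - M * N) 0 0 0 t. Proof. by []. Qed.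
Definition f3 (K : fieldType) (M N t : K) : K := P5 (- 2%:R * M ^+ 2 * N + 3%:R * M ^+ 2 * N ^+ 2 - M ^+ 2 * N ^+ 3) (- 3%:R * M * N ^+ 2 + 3%:R * M * N ^+ 3 + 4%:R * M ^+ 2 * N - 3%:R * M ^+ 2 * N ^+ 2 - M ^+ 2 * N ^+ 3) (- N ^+ 3 + 3%:R * M * N ^+ 2 - 2%:R * M ^+ 2 * N) 0 0 t.
Definition f3' (K : fieldType) (M N t : K) : K := P5' (- 2%:R * M ^+ 2 * N + 3%:R * M ^+ 2 * N ^+ 2 - M ^+ 2 * N ^+ 3) (- 3%:R * M * N ^+ 2 + 3%:R * M * N ^+ 3 + 4%:R * M ^+ 2 * N - 3%:R * M ^+ 2 * N ^+ 2 - M ^+ 2 * N ^+ 3) (- N ^+ 3 + 3%:R * M * N ^+ 2 - 2%:R * M ^+ 2 * N) 0 0 t.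
Lemma f3c (K : fieldType) (M N t : K) : f3 M N t = P5 (- 2%:R * M ^+ 2 * N + 3%:R * M ^+ 2 * N ^+ 2 - M ^+ 2 * N ^+ 3) (- 3%:R * M * N ^+ 2 + 3%:R * M * N ^+ 3 + 4%:R * M ^+ 2 * N - 3%:R * M ^+ 2 * N ^+ 2 - M ^+ 2 * N ^+ 3) (- N ^+ 3 + 3%:R * M * N ^+ 2 - 2%:R * M ^+ 2 * N) 0 0 t. Proof. by []. Qed.
Lemma f3'c (K : fieldType) (M N t : K) : f3' M N t = P5' (- 2%:R * M ^+ 2 * N + 3%:R * M ^+ 2 * N ^+ 2 - M ^+ 2 * N ^+ 3) (- 3%:R * M * N ^+ 2 + 3%:R * M * N ^+ 3 + 4%:R * M ^+ 2 * N - 3%:R * M ^+ 2 * N ^+ 2 - M ^+ 2 * N ^+ 3) (- N ^+ 3 + 3%:R * M * N ^+ 2 - 2%:R * M ^+ 2 * N) 0 0 t. Proof. by []. Qed.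
Definition f4 (K : fieldType) (M N t : K) : K := P5 (6%:R * M ^+ 3 * N - 11%:R * M ^+ 3 * N ^+ 2 + 6%:R * M ^+ 3 * N ^+ 3 - M ^+ 3 * N ^+ 4) (11%:R * M ^+ 2 * N ^+ 2 - 18%:R * M ^+ 2 * N ^+ 3 + 7%:R * M ^+ 2 * N ^+ 4 - 18%:R * M ^+ 3 * N + 22%:R * M ^+ 3 * N ^+ 2 - 4%:R * M ^+ 3 * N ^+ 4) (6%:R * M * N ^+ 3 - 6%:R * M * N ^+ 4 - 22%:R * M ^+ 2 * N ^+ 2 + 18%:R * M ^+ 2 * N ^+ 3 + 4%:R * M ^+ 2 * N ^+ 4 + 18%:R * M ^+ 3 * N - 11%:R * M ^+ 3 * N ^+ 2 - 6%:R * M ^+ 3 * N ^+ 3 - M ^+ 3 * N ^+ 4) (N ^+ 4 - 6%:R * M * N ^+ 3 + 11%:R * M ^+ 2 * N ^+ 2 - 6%:R * M ^+ 3 * N) 0 t.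
Definition f4' (K : fieldType) (M N t : K) : K := P5' (6%:R * M ^+ 3 * N - 11%:R * M ^+ 3 * N ^+ 2 + 6%:R * M ^+ 3 * N ^+ 3 - M ^+ 3 * N ^+ 4) (11%:R * M ^+ 2 * N ^+ 2 - 18%:R * M ^+ 2 * N ^+ 3 + 7%:R * M ^+ 2 * N ^+ 4 - 18%:R * M ^+ 3 * N + 22%:R * M ^+ 3 * N ^+ 2 - 4%:R * M ^+ 3 * N ^+ 4) (6%:R * M * N ^+ 3 - 6%:R * M * N ^+ 4 - 22%:R * M ^+ 2 * N ^+ 2 + 18%:R * M ^+ 2 * N ^+ 3 + 4%:R * M ^+ 2 * N ^+ 4 + 18%:R * M ^+ 3 * N - 11%:R * M ^+ 3 * N ^+ 2 - 6%:R * M ^+ 3 * N ^+ 3 - M ^+ 3 * N ^+ 4) (N ^+ 4 - 6%:R * M * N ^+ 3 + 11%:R * M ^+ 2 * N ^+ 2 - 6%:R * M ^+ 3 * N) 0 t.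
Lemma f4c (K : fieldType) (M N t : K) : f4 M N t = P5 (6%:R * M ^+ 3 * N - 11%:R * M ^+ 3 * N ^+ 2 + 6%:R * M ^+ 3 * N ^+ 3 - M ^+ 3 * N ^+ 4) (11%:R * M ^+ 2 * N ^+ 2 - 18%:R * M ^+ 2 * N ^+ 3 + 7%:R * M ^+ 2 * N ^+ 4 - 18%:R * M ^+ 3 * N + 22%:R * M ^+ 3 * N ^+ 2 - 4%:R * M ^+ 3 * N ^+ 4) (6%:R * M * N ^+ 3 - 6%:R * M * N ^+ 4 - 22%:R * M ^+ 2 * N ^+ 2 + 18%:R * M ^+ 2 * N ^+ 3 + 4%:R * M ^+ 2 * N ^+ 4 + 18%:R * M ^+ 3 * N - 11%:R * M ^+ 3 * N ^+ 2 - 6%:R * M ^+ 3 * N ^+ 3 - M ^+ 3 * N ^+ 4) (N ^+ 4 - 6%:R * M * N ^+ 3 + 11%:R * M ^+ 2 * N ^+ 2 - 6%:R * M ^+ 3 * N) 0 t. Proof. by []. Qed.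
Lemma f4'c (K : fieldType) (M N t : K) : f4' M N t = P5' (6%:R * M ^+ 3 * N - 11%:R * M ^+ 3 * N ^+ 2 + 6%:R * M ^+ 3 * N ^+ 3 - M ^+ 3 * N ^+ 4) (11%:R * M ^+ 2 * N ^+ 2 - 18%:R * M ^+ 2 * N ^+ 3 + 7%:R * M ^+ 2 * N ^+ 4 - 18%:R * M ^+ 3 * N + 22%:R * M ^+ 3 * N ^+ 2 - 4%:R * M ^+ 3 * N ^+ 4) (6%:R * M * N ^+ 3 - 6%:R * M * N ^+ 4 - 22%:R * M ^+ 2 * N ^+ 2 + 18%:R * M ^+ 2 * N ^+ 3 + 4%:R * M ^+ 2 * N ^+ 4 + 18%:R * M ^+ 3 * N - 11%:R * M ^+ 3 * N ^+ 2 - 6%:R * M ^+ 3 * N ^+ 3 - M ^+ 3 * N ^+ 4) (N ^+ 4 - 6%:R * M * N ^+ 3 + 11%:R * M ^+ 2 * N ^+ 2 - 6%:R * M ^+ 3 * N) 0 t. Proof. by []. Qed.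
Definition f5 (K : fieldType) (M N t : K) : K := P5 (- 24%:R * M ^+ 4 * N + 50%:R * M ^+ 4 * N ^+ 2 - 35%:R * M ^+ 4 * N ^+ 3 + 10%:R * M ^+ 4 * N ^+ 4 - M ^+ 4 * N ^+ 5) (- 50%:R * M ^+ 3 * N ^+ 2 + 105%:R * M ^+ 3 * N ^+ 3 - 70%:R * M ^+ 3 * N ^+ 4 + 15%:R * M ^+ 3 * N ^+ 5 + 96%:R * M ^+ 4 * N - 150%:R * M ^+ 4 * N ^+ 2 + 35%:R * M ^+ 4 * N ^+ 3 + 30%:R * M ^+ 4 * N ^+ 4 - 11%:R * M ^+ 4 * N ^+ 5) (- 35%:R * M ^+ 2 * N ^+ 3 + 60%:R * M ^+ 2 * N ^+ 4 - 25%:R * M ^+ 2 * N ^+ 5 + 150%:R * M ^+ 3 * N ^+ 2 - 210%:R * M ^+ 3 * N ^+ 3 + 30%:R * M ^+ 3 * N ^+ 4 + 30%:R * M ^+ 3 * N ^+ 5 - 144%:R * M ^+ 4 * N + 150%:R * M ^+ 4 * N ^+ 2 + 35%:R * M ^+ 4 * N ^+ 3 - 30%:R * M ^+ 4 * N ^+ 4 - 11%:R * M ^+ 4 * N ^+ 5) (- 10%:R * M * N ^+ 4 + 10%:R * M * N ^+ 5 + 70%:R * M ^+ 2 * N ^+ 3 - 60%:R * M ^+ 2 * N ^+ 4 - 10%:R * M ^+ 2 * N ^+ 5 - 150%:R * M ^+ 3 * N ^+ 2 + 105%:R * M ^+ 3 * N ^+ 3 + 40%:R * M ^+ 3 * N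 ^+ 4 + 5%:R * M ^+ 3 * N ^+ 5 + 96%:R * M ^+ 4 * N - 50%:R * M ^+ 4 * N ^+ 2 - 35%:R * M ^+ 4 * N ^+ 3 - 10%:R * M ^+ 4 * N ^+ 4 - M ^+ 4 * N ^+ 5) (- N ^+ 5 + 10%:R * M * N ^+ 4 - 35%:R * M ^+ 2 * N ^+ 3 + 50%:R * M ^+ 3 * N ^+ 2 - 24%:R * M ^+ 4 * N) t.
Definition f5' (K : fieldType) (M N t : K) : K := P5' (- 24%:R * M ^+ 4 * N + 50%:R * M ^+ 4 * N ^+ 2 - 35%:R * M ^+ 4 * N ^+ 3 + 10%:R * M ^+ 4 * N ^+ 4 - M ^+ 4 * N ^+ 5) (- 50%:R * M ^+ 3 * N ^+ 2 + 105%:R * M ^+ 3 * N ^+ 3 - 70%:R * M ^+ 3 * N ^+ 4 + 15%:R * M ^+ 3 * N ^+ 5 + 96%:R * M ^+ 4 * N - 150%:R * M ^+ 4 * N ^+ 2 + 35%:R * M ^+ 4 * N ^+ 3 + 30%:R * M ^+ 4 * N ^+ 4 - 11%:R * M ^+ 4 * N ^+ 5) (- 35%:R * M ^+ 2 * N ^+ 3 + 60%:R * M ^+ 2 * N ^+ 4 - 25%:R * M ^+ 2 * N ^+ 5 + 150%:R * M ^+ 3 * N ^+ 2 - 210%:R * M ^+ 3 * N ^+ 3 + 30%:R * M ^+ 3 * N ^+ 4 + 30%:R * M ^+ 3 * N ^+ 5 - 144%:R * M ^+ 4 * N + 150%:R * M ^+ 4 * N ^+ 2 + 35%:R * M ^+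 4 * N ^+ 3 - 30%:R * M ^+ 4 * N ^+ 4 - 11%:R * M ^+ 4 * N ^+ 5) (- 10%:R * M * N ^+ 4 + 10%:R * M * N ^+ 5 + 70%:R * M ^+ 2 * N ^+ 3 - 60%:R * M ^+ 2 * N ^+ 4 - 10%:R * M ^+ 2 * N ^+ 5 - 150%:R * M ^+ 3 * N ^+ 2 + 105%:R * M ^+ 3 * N ^+ 3 + 40%:R * M ^+ 3 * N ^+ 4 + 5%:R * M ^+ 3 * N ^+ 5 + 96%:R * M ^+ 4 * N - 50%:R * M ^+ 4 * N ^+ 2 - 35%:R * M ^+ 4 * N ^+ 3 - 10%:R * M ^+ 4 * N ^+ 4 - M ^+ 4 * N ^+ 5) (- N ^+ 5 + 10%:R * M * N ^+ 4 - 35%:R * M ^+ 2 * N ^+ 3 + 50%:R * M ^+ 3 * N ^+ 2 - 24%:R * M ^+ 4 * N) t.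
Lemma f5c (K : fieldType) (M N t : K) : f5 M N t = P5 (- 24%:R * M ^+ 4 * N + 50%:R * M ^+ 4 * N ^+ 2 - 35%:R * M ^+ 4 * N ^+ 3 + 10%:R * M ^+ 4 * N ^+ 4 - M ^+ 4 * N ^+ 5) (- 50%:R * M ^+ 3 * N ^+ 2 + 105%:R * M ^+ 3 * N ^+ 3 - 70%:R * M ^+ 3 * N ^+ 4 + 15%:R * M ^+ 3 * N ^+ 5 + 96%:R * M ^+ 4 * N - 150%:R * M ^+ 4 * N ^+ 2 + 35%:R * M ^+ 4 * N ^+ 3 + 30%:R * M ^+ 4 * N ^+ 4 - 11%:R * M ^+ 4 * N ^+ 5) (- 35%:R * M ^+ 2 * N ^+ 3 + 60%:R * M ^+ 2 * N ^+ 4 - 25%:R * M ^+ 2 * N ^+ 5 + 150%:R * M ^+ 3 * N ^+ 2 - 210%:R * M ^+ 3 * N ^+ 3 + 30%:R * M ^+ 3 * N ^+ 4 + 30%:R * M ^+ 3 * N ^+ 5 - 144%:R * M ^+ 4 * N + 150%:R * M ^+ 4 * N ^+ 2 + 35%:R * M ^+ 4 * N ^+ 3 - 30%:R * M ^+ 4 * N ^+ 4 - 11%:R * M ^+ 4 * N ^+ 5) (- 10%:R * M * N ^+ 4 + 10%:R * M * N ^+ 5 + 70%:R * M ^+ 2 * N ^+ 3 - 60%:R * M ^+ 2 * N ^+ 4 - 10%:R * M ^+ 2 * N ^+ 5 - 150%:R * M ^+ 3 * N ^+ 2 + 105%:R * M ^+ 3 * N ^+ 3 + 40%:R * M ^+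 3 * N ^+ 4 + 5%:R * M ^+ 3 * N ^+ 5 + 96%:R * M ^+ 4 * N - 50%:R * M ^+ 4 * N ^+ 2 - 35%:R * M ^+ 4 * N ^+ 3 - 10%:R * M ^+ 4 * N ^+ 4 - M ^+ 4 * N ^+ 5) (- N ^+ 5 + 10%:R * M * N ^+ 4 - 35%:R * M ^+ 2 * N ^+ 3 + 50%:R * M ^+ 3 * N ^+ 2 - 24%:R * M ^+ 4 * N) t. Proof. by []. Qed.
Lemma f5'c (K : fieldType) (M N t : K) : f5' M N t = P5' (- 24%:R * M ^+ 4 * N + 50%:R * M ^+ 4 * N ^+ 2 - 35%:R * M ^+ 4 * N ^+ 3 + 10%:R * M ^+ 4 * N ^+ 4 - M ^+ 4 * N ^+ 5) (- 50%:R * M ^+ 3 * N ^+ 2 + 105%:R * M ^+ 3 * N ^+ 3 - 70%:R * M ^+ 3 * N ^+ 4 + 15%:R * M ^+ 3 * N ^+ 5 + 96%:R * M ^+ 4 * N - 150%:R * M ^+ 4 * N ^+ 2 + 35%:R * M ^+ 4 * N ^+ 3 + 30%:R * M ^+ 4 * N ^+ 4 - 11%:R * M ^+ 4 * N ^+ 5) (- 35%:R * M ^+ 2 * N ^+ 3 + 60%:R * M ^+ 2 * N ^+ 4 - 25%:R * M ^+ 2 * N ^+ 5 + 150%:R * M ^+ 3 * N ^+ 2 - 210%:R * M ^+ 3 * N ^+ 3 + 30%:R * M ^+ 3 * N ^+ 4 + 30%:R * M ^+ 3 * N ^+ 5 - 144%:R * M ^+ 4 * N + 150%:R * M ^+ 4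 * N ^+ 2 + 35%:R * M ^+ 4 * N ^+ 3 - 30%:R * M ^+ 4 * N ^+ 4 - 11%:R * M ^+ 4 * N ^+ 5) (- 10%:R * M * N ^+ 4 + 10%:R * M * N ^+ 5 + 70%:R * M ^+ 2 * N ^+ 3 - 60%:R * M ^+ 2 * N ^+ 4 - 10%:R * M ^+ 2 * N ^+ 5 - 150%:R * M ^+ 3 * N ^+ 2 + 105%:R * M ^+ 3 * N ^+ 3 + 40%:R * M ^+ 3 * N ^+ 4 + 5%:R * M ^+ 3 * N ^+ 5 + 96%:R * M ^+ 4 * N - 50%:R * M ^+ 4 * N ^+ 2 - 35%:R * M ^+ 4 * N ^+ 3 - 10%:R * M ^+ 4 * N ^+ 4 - M ^+ 4 * N ^+ 5) (- N ^+ 5 + 10%:R * M * N ^+ 4 - 35%:R * M ^+ 2 * N ^+ 3 + 50%:R * M ^+ 3 * N ^+ 2 - 24%:R * M ^+ 4 * N) t. Proof. by []. Qed.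

Lemma Hf1 L K iota x D (HD : @is_hasse_deriv L K iota x D) (m n : nat) t :
  D 1%N (f1 m%:R n%:R t) = f1' m%:R n%:R t * D 1%N t.
Proof. rewrite /f1 /f1' (dP5 HD) //; dsimp HD; try ring. Qed.

Lemma Hf2 L K iota x D (HD : @is_hasse_deriv L K iota x D) (m n : nat) t :
  D 1%N (f2 m%:R n%:R t) = f2' m%:R n%:R t * D 1%N t.
Proof. rewrite /f2 /f2' (dP5 HD) //; dsimp HD; try ring. Qed.

Lemma Hf3 L K iota x D (HD : @is_hasse_deriv L K iota x D) (m n : nat) t :
  D 1%N (f3 m%:R n%:R t) = f3' m%:R n%:R t * D 1%N t.
Proof. rewrite /f3 /f3' (dP5 HD) //; dsimp HD; try ring. Qed.

Lemma Hf4 L K iota x D (HD : @is_hasse_deriv L K iota x D) (m n : nat) t :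
  D 1%N (f4 m%:R n%:R t) = f4' m%:R n%:R t * D 1%N t.
Proof. rewrite /f4 /f4' (dP5 HD) //; dsimp HD; try ring. Qed.

Lemma Hf5 L K iota x D (HD : @is_hasse_deriv L K iota x D) (m n : nat) t :
  D 1%N (f5 m%:R n%:R t) = f5' m%:R n%:R t * D 1%N t.
Proof. rewrite /f5 /f5' (dP5 HD) //; dsimp HD; try ring. Qed.

Lemma bump0 i : bump 0 i = i.+1. Proof. by []. Qed.
Lemma bumpS h i : bump h.+1 i.+1 = (bump h i).+1. Proof. by rewrite /bump ltnS addnS. Qed.
Lemma bumpS0 h : bump h.+1 0 = 0%N. Proof. by []. Qed.
Definition bumpE := (bump0, bumpS, bumpS0).
Lemma det_col0 (K : comRingType) n (f : nat -> nat -> K) :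
  (forall i, (0 < i)%N -> f i 0%N = 0) ->
  \det (\matrix_(i < n.+1, j < n.+1) f i j) =
  f 0%N 0%N * \det (\matrix_(i < n, j < n) f i.+1 j.+1).
Proof.
move=> H; rewrite (expand_det_col _ ord0) big_ord_recl big1 ?addr0 => [|i _].
  rewrite mxE /cofactor /= expr0 mul1r; congr (_ * \det _).
  by apply/matrixP=> i j; rewrite !mxE.
by rewrite mxE H // mul0r.
Qed.

Lemma det_col1 (K : comRingType) n (f : nat -> nat -> K) :
  (forall i, (0 < i)%N -> f i 1%N = 0) ->
  \det (\matrix_(i < n.+2, j < n.+2) f i j) =
  - f 0%N 1%N * \det (\matrix_(i < n.+1, j < n.+1) f i.+1 (bump 1 j)).
Proof.
move=> H; rewrite (expand_det_col _ (lift ord0 ord0)) big_ord_recl big1 ?addr0 => [|i _].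
  rewrite mxE /cofactor /= !bumpE add0n expr1 mulN1r mulrN -mulNr; congr (_ * \det _).
  by apply/matrixP=> i j; rewrite !mxE.
by rewrite mxE H // mul0r.
Qed.

Lemma det3 (K : comRingType) (f : nat -> nat -> K) :
  \det (\matrix_(i < 3, j < 3) f i j) =
  f 0%N 0%N * (f 1%N 1%N * f 2%N 2%N - f 1%N 2%N * f 2%N 1%N)
  - f 0%N 1%N * (f 1%N 0%N * f 2%N 2%N - f 1%N 2%N * f 2%N 0%N)
  + f 0%N 2%N * (f 1%N 0%N * f 2%N 1%N - f 1%N 1%N * f 2%N 0%N).
Proof.
rewrite (expand_det_row _ ord0) !big_ord_recl big_ord0 /cofactor.
rewrite !(expand_det_row _ ord0) !big_ord_recl !big_ord0 /cofactor.
rewrite !det_mx11 !mxE /= !bumpE /=.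
rewrite !addn0 ?add0n; ring.
Qed.

Lemma det6 (K : comRingType) (f : nat -> nat -> K) :
  (forall i, (0 < i)%N -> f i 0%N = 0) ->
  (forall i, (1 < i)%N -> f i 1%N = 0) ->
  (forall i, (2 < i)%N -> f i 3%N = 0) ->
  \det (\matrix_(i < 6, j < 6) f i j) =
  - (f 0%N 0%N * f 1%N 1%N * f 2%N 3%N) *
  (f 3%N 2%N * (f 4%N 4%N * f 5%N 5%N - f 4%N 5%N * f 5%N 4%N)
  - f 3%N 4%N * (f 4%N 2%N * f 5%N 5%N - f 4%N 5%N * f 5%N 2%N)
  + f 3%N 5%N * (f 4%N 2%N * f 5%N 4%N - f 4%N 4%N * f 5%N 2%N)).
Proof.
move=> H0 H1 H3.
rewrite (@det_col0 _ 5 f) // (@det_col0 _ 4 (fun i j => f i.+1 j.+1)) => [|i i0]; last exact: H1.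
rewrite (@det_col1 _ 2 (fun i j => f i.+2 j.+2)) => [|i i0]; last exact: H3.
rewrite (@det3 _ (fun i j => f i.+3 (bump 1 j).+2)) /= !bumpE.
ring.
Qed.

Lemma hmul2 (K : fieldType) (D : nat -> K -> K)
  (Hmul : forall k z w, D k (z * w) = \sum_(i < k.+1) D i z * D (k - i)%N w) z w :
  D 2 (z * w) = D 0%N z * D 2 w + D 1%N z * D 1%N w + D 2 z * D 0%N w.
Proof. rewrite Hmul !big_ord_recr big_ord0 /= add0r. reflexivity. Qed.
Lemma hmul3 (K : fieldType) (D : nat -> K -> K)
  (Hmul : forall k z w, D k (z * w) = \sum_(i < k.+1) D i z * D (k - i)%N w) z w :
  D 3 (z * w) = D 0%N z * D 3 w + D 1%N z * D 2 w + D 2 z * D 1%N w + D 3 z * D 0%N w.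
Proof. rewrite Hmul !big_ord_recr big_ord0 /= add0r. reflexivity. Qed.
Lemma hmul4 (K : fieldType) (D : nat -> K -> K)
  (Hmul : forall k z w, D k (z * w) = \sum_(i < k.+1) D i z * D (k - i)%N w) z w :
  D 4 (z * w) = D 0%N z * D 4 w + D 1%N z * D 3 w + D 2 z * D 2 w + D 3 z * D 1%N w
     + D 4 z * D 0%N w.
Proof. rewrite Hmul !big_ord_recr big_ord0 /= add0r. reflexivity. Qed.
Lemma hmul5 (K : fieldType) (D : nat -> K -> K)
  (Hmul : forall k z w, D k (z * w) = \sum_(i < k.+1) D i z * D (k - i)%N w) z w :
  D 5 (z * w) = D 0%N z * D 5 w + D 1%N z * D 4 w + D 2 z * D 3 w + D 3 z * D 2 w
     + D 4 z * D 1%N w + D 5 z * D 0%N w.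
Proof. rewrite Hmul !big_ord_recr big_ord0 /= add0r. reflexivity. Qed.

Lemma det_alg (K : fieldType) (x y y1 a2 a3 a4 a5 : K) :
  -1 *
  (a3 *
   ((x * a4 + a3) * (y * a5 + y1 * a4 + a2 * a3 + a3 * a2 + a4 * y1 + a5 * y) -
    (y * a4 + y1 * a3 + a2 * a2 + a3 * y1 + a4 * y) * (x * a5 + a4)) -
   (x * a3 + a2) *
   (a4 * (y * a5 + y1 * a4 + a2 * a3 + a3 * a2 + a4 * y1 + a5 * y) -
    (y * a4 + y1 * a3 + a2 * a2 + a3 * y1 + a4 * y) * a5) +
   (y * a3 + y1 * a2 + a2 * y1 + a3 * y) *
   (a4 * (x * a5 + a4) - (x * a4 + a3) * a5)) =
  - (a2 * (2%:R * a3 ^+ 3 - 3%:R * a2 * a3 * a4 + a2 * a2 * a5)).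
Proof. ring. Qed.

Lemma wdet_val L K iota x D (HD : @is_hasse_deriv L K iota x D) (y : K) :
  hasse_wdet D (fun i : 'I_6 => nat_of_ord i) (conic_monomials x y) =
  - (D 2 y * (2%:R * D 3 y ^+ 3 - 3%:R * D 2 y * D 3 y * D 4 y + D 2 y ^+ 2 * D 5 y)).
Proof.
have [H0 [Hadd [Hmul [Hc [Hx1 [Hx _]]]]]] := HD.
have Hk1 k : (0 < k)%N -> D k 1 = 0 by move=> k0; rewrite -(rmorph1 iota) Hc.
rewrite /hasse_wdet /conic_monomials.
rewrite (@det6 _ (fun i j => D i (nth 0 [:: 1; x; y; x ^+ 2; x * y; y ^+ 2] j))) /=; last first.
- move=> i i2; rewrite expr2 Hmul big1 // => j _.
  case: (ltnP 1 j) => hj; first by rewrite Hx // mul0r.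
  rewrite (Hx (i - j)%N) ?mulr0 //.
  by move: hj i2; lia.
- by move=> i i1; rewrite Hx.
- by move=> i i0; rewrite Hk1.
rewrite !expr2 !(hmul2 Hmul) !(hmul3 Hmul) !(hmul4 Hmul) !(hmul5 Hmul) !H0 Hx1 !Hx //. set a3 := D 3 y. set a4 := D 4 y. set a5 := D 5 y. set a2 := D 2 y. clearbody a2 a3 a4 a5. move: (D 1%N y) => y1. rewrite !mul0r !mulr0 !mul1r !addr0 !add0r.
exact: det_alg.
Qed.
Lemma incr_ge M (e : 'I_M.+1 -> nat) : strictly_incr e -> forall i : 'I_M.+1, (i <= e i)%N.
Proof.
move=> He.
suff H : forall k (Hk : (k < M.+1)%N), (k <= e (Ordinal Hk))%N.
  by case=> i Hi; apply: H.
elim=> [|k IH] Hk //.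
have Hk' : (k < M.+1)%N by apply: ltnW.
apply: leq_ltn_trans (IH Hk') _.
by apply: He.
Qed.

Lemma lex_id M (e : 'I_M.+1 -> nat) : strictly_incr e -> lex_le (fun i => nat_of_ord i) e.
Proof.
move=> He; have Hge := incr_ge He.
case: (boolP [exists k : 'I_M.+1, e k != k]) => [/existsP ex | /existsPn all].
- right.
  have exn : exists k, (k < M.+1)%N && (e (inord k) != k).
    by case: ex => k Hk; exists k; rewrite ltn_ord inord_val.
  case: (ex_minnP exn) => k /andP [kM Hk] Hmin.
  exists (inord k); split.
  + move=> i; rewrite inordK // => ik.
    apply/eqP; apply: contraLR ik => Hi; rewrite -leqNgt; apply: Hmin.
    by rewrite ltn_ord inord_val eq_sym.
  + rewrite ltn_neqAle Hge andbT inordK //; by rewrite eq_sym.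
- left; apply: functional_extensionality => i.
  by move: (all i); rewrite negbK => /eqP.
Qed.

Lemma classical_iff (K : fieldType) (D : nat -> K -> K) (x y : K) :
  classical_conics D x y <->
  hasse_wdet D (fun i : 'I_6 => nat_of_ord i) (conic_monomials x y) != 0.
Proof.
split; first by case.
move=> H; split => //; last by move=> e' He' _; apply: lex_id.
Qed.
Definition w3 (R : comRingType) (M N : R) : R := (4%:R * M ^+ 6 * N ^+ 3 - 18%:R * M ^+ 6 * N ^+ 4 + 24%:R * M ^+ 6 * N ^+ 5 - 24%:R * M ^+ 6 * N ^+ 7 + 18%:R * M ^+ 6 * N ^+ 8 - 4%:R * M ^+ 6 * N ^+ 9).
Definition w4 (R : comRingType) (M N : R) : R := (18%:R * M ^+ 5 * N ^+ 4 - 63%:R * M ^+ 5 * N ^+ 5 + 45%:R * M ^+ 5 * N ^+ 6 + 45%:R * M ^+ 5 * N ^+ 7 - 63%:R * M ^+ 5 * N ^+ 8 + 18%:R * M ^+ 5 * N ^+ 9 - 24%:R * M ^+ 6 * N ^+ 3 + 90%:R * M ^+ 6 * N ^+ 4 - 81%:R * M ^+ 6 * N ^+ 5 - 45%:R * M ^+ 6 * N ^+ 6 + 99%:R * M ^+ 6 * N ^+ 7 - 45%:R * M ^+ 6 * N ^+ 8 + 6%:R * M ^+ 6 * N ^+ 9).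
Definition w5 (R : comRingType) (M N : R) : R := (24%:R * M ^+ 4 * N ^+ 5 - 45%:R * M ^+ 4 * N ^+ 6 - 30%:R * M ^+ 4 * N ^+ 7 + 45%:R * M ^+ 4 * N ^+ 8 + 6%:R * M ^+ 4 * N ^+ 9 - 90%:R * M ^+ 5 * N ^+ 4 + 252%:R * M ^+ 5 * N ^+ 5 - 90%:R * M ^+ 5 * N ^+ 6 - 180%:R * M ^+ 5 * N ^+ 7 + 180%:R * M ^+ 5 * N ^+ 8 - 72%:R * M ^+ 5 * N ^+ 9 + 60%:R * M ^+ 6 * N ^+ 3 - 180%:R * M ^+ 6 * N ^+ 4 + 84%:R * M ^+ 6 * N ^+ 5 + 135%:R * M ^+ 6 * N ^+ 6 - 150%:R * M ^+ 6 * N ^+ 7 + 45%:R * M ^+ 6 * N ^+ 8 + 6%:R * M ^+ 6 * N ^+ 9).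
Definition w6 (R : comRingType) (M N : R) : R := (45%:R * M ^+ 3 * N ^+ 7 - 90%:R * M ^+ 3 * N ^+ 8 + 45%:R * M ^+ 3 * N ^+ 9 - 96%:R * M ^+ 4 * N ^+ 5 + 135%:R * M ^+ 4 * N ^+ 6 + 120%:R * M ^+ 4 * N ^+ 7 - 135%:R * M ^+ 4 * N ^+ 8 - 24%:R * M ^+ 4 * N ^+ 9 + 180%:R * M ^+ 5 * N ^+ 4 - 378%:R * M ^+ 5 * N ^+ 5 + 225%:R * M ^+ 5 * N ^+ 7 - 90%:R * M ^+ 5 * N ^+ 8 + 63%:R * M ^+ 5 * N ^+ 9 - 80%:R * M ^+ 6 * N ^+ 3 + 180%:R * M ^+ 6 * N ^+ 4 - 6%:R * M ^+ 6 * N ^+ 5 - 135%:R * M ^+ 6 * N ^+ 6 + 90%:R * M ^+ 6 * N ^+ 7 - 45%:R * M ^+ 6 * N ^+ 8 - 4%:R * M ^+ 6 * N ^+ 9).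
Definition w7 (R : comRingType) (M N : R) : R := (- 24%:R * M ^+ 2 * N ^+ 7 + 63%:R * M ^+ 2 * N ^+ 8 - 39%:R * M ^+ 2 * N ^+ 9 - 90%:R * M ^+ 3 * N ^+ 7 + 135%:R * M ^+ 3 * N ^+ 8 - 45%:R * M ^+ 3 * N ^+ 9 + 144%:R * M ^+ 4 * N ^+ 5 - 135%:R * M ^+ 4 * N ^+ 6 - 150%:R * M ^+ 4 * N ^+ 7 + 90%:R * M ^+ 4 * N ^+ 8 + 51%:R * M ^+ 4 * N ^+ 9 - 180%:R * M ^+ 5 * N ^+ 4 + 252%:R * M ^+ 5 * N ^+ 5 + 90%:R * M ^+ 5 * N ^+ 6 - 90%:R * M ^+ 5 * N ^+ 7 - 45%:R * M ^+ 5 * N ^+ 8 - 27%:R * M ^+ 5 * N ^+ 9 + 60%:R * M ^+ 6 * N ^+ 3 - 90%:R * M ^+ 6 * N ^+ 4 - 36%:R * M ^+ 6 * N ^+ 5 + 45%:R * M ^+ 6 * N ^+ 6 - 6%:R * M ^+ 6 * N ^+ 7 + 27%:R * M ^+ 6 * N ^+ 8).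
Definition w8 (R : comRingType) (M N : R) : R := (- 18%:R * M * N ^+ 8 + 18%:R * M * N ^+ 9 + 48%:R * M ^+ 2 * N ^+ 7 - 63%:R * M ^+ 2 * N ^+ 8 + 15%:R * M ^+ 2 * N ^+ 9 + 45%:R * M ^+ 3 * N ^+ 7 - 45%:R * M ^+ 3 * N ^+ 8 - 96%:R * M ^+ 4 * N ^+ 5 + 45%:R * M ^+ 4 * N ^+ 6 + 60%:R * M ^+ 4 * N ^+ 7 - 9%:R * M ^+ 4 * N ^+ 9 + 90%:R * M ^+ 5 * N ^+ 4 - 63%:R * M ^+ 5 * N ^+ 5 - 45%:R * M ^+ 5 * N ^+ 6 + 18%:R * M ^+ 5 * N ^+ 8 - 24%:R * M ^+ 6 * N ^+ 3 + 18%:R * M ^+ 6 * N ^+ 4 + 15%:R * M ^+ 6 * N ^+ 5 - 9%:R * M ^+ 6 * N ^+ 7).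
Definition w9 (R : comRingType) (M N : R) : R := (- 4%:R * N ^+ 9 + 18%:R * M * N ^+ 8 - 24%:R * M ^+ 2 * N ^+ 7 + 24%:R * M ^+ 4 * N ^+ 5 - 18%:R * M ^+ 5 * N ^+ 4 + 4%:R * M ^+ 6 * N ^+ 3).

Definition disj (p m n : nat) : Prop :=
   ((p %| m - 2)%N /\ (p %| n - 2)%N) \/
   ((p %| m + 1)%N /\ (p %| n + 1)%N) \/
   ((p %| 2 * m - 1)%N /\ (p %| 2 * n - 1)%N) \/
   ((p %| m - 1)%N /\ (p %| (n - 1) * (n - 2) * (2 * n - 1) * (n + 1))%N) \/
   ((p %| n - 1)%N /\ (p %| (m + 1) * (m - 2) * (2 * m - 1))%N).

Lemma nzsmall (F : fieldType) p k : p \in [pchar F] -> (0 < k)%N -> (k < p)%N -> k%:R != 0 :> F.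
Proof.
move=> Hp k0 kp; rewrite -(dvdn_pcharf Hp); apply/negP => /dvdn_leq => /(_ k0).
by rewrite leqNgt kp.
Qed.

Lemma dv1 (F : fieldType) p k : p \in [pchar F] -> (1 <= k)%N ->
  (p %| k - 1)%N = (k%:R - 1 == 0 :> F).
Proof. by move=> Hp k1; rewrite (dvdn_pcharf Hp) natrB. Qed.
Lemma dv2 (F : fieldType) p k : p \in [pchar F] -> (2 <= k)%N ->
  (p %| k - 2)%N = (k%:R - 2%:R == 0 :> F).
Proof. by move=> Hp k1; rewrite (dvdn_pcharf Hp) natrB. Qed.
Lemma dv3 (F : fieldType) p k : p \in [pchar F] -> (1 <= k)%N ->
  (p %| 2 * k - 1)%N = (2%:R * k%:R - 1 == 0 :> F).
Proof. by move=> Hp k1; rewrite (dvdn_pcharf Hp) natrB ?natrM //; lia. Qed.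
Lemma dv4 (F : fieldType) p k : p \in [pchar F] ->
  (p %| k + 1)%N = (k%:R + 1 == 0 :> F).
Proof. by move=> Hp; rewrite (dvdn_pcharf Hp) natrD. Qed.

Lemma w3E (F : fieldType) (M N : F) :
  w3 M N = - 2%:R * M ^+ 6 * N ^+ 3 * (N - 1) ^+ 3 * (N - 2%:R) * (2%:R * N - 1) * (N + 1).
Proof. rewrite /w3; ring. Qed.
Lemma w9E (F : fieldType) (M N : F) :
  w9 M N = - 2%:R * N ^+ 3 * (N - M) ^+ 3 * (N - 2%:R * M) * (2%:R * N - M) * (N + M).
Proof. rewrite /w9; ring. Qed.

Definition adisj (F : fieldType) (M N : F) : Prop :=
  (M - 2%:R = 0 /\ N - 2%:R = 0) \/ (M + 1 = 0 /\ N + 1 = 0) \/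
  (2%:R * M - 1 = 0 /\ 2%:R * N - 1 = 0) \/
  (M - 1 = 0 /\ (N - 1 = 0 \/ N - 2%:R = 0 \/ 2%:R * N - 1 = 0 \/ N + 1 = 0)) \/
  (N - 1 = 0 /\ (M + 1 = 0 \/ M - 2%:R = 0 \/ 2%:R * M - 1 = 0)).

Lemma cases4 (F : fieldType) (a b c d : F) : a * b * c * d = 0 ->
  a = 0 \/ b = 0 \/ c = 0 \/ d = 0.
Proof.
move/eqP; rewrite !mulf_eq0 -!orbA => /or4P [] /eqP; tauto.
Qed.

Lemma NT2alg (F : fieldType) (M N : F) :
  2%:R != 0 :> F -> 3%:R != 0 :> F -> 5%:R != 0 :> F -> M != 0 -> N != 0 ->
  w3 M N = 0 -> w9 M N = 0 -> w5 M N = 0 -> w6 M N = 0 -> adisj M N.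
Proof.
move=> h2 h3 h5 hM hN H3 H9 H5 H6.
have cN : N - 1 = 0 \/ N - 2%:R = 0 \/ 2%:R * N - 1 = 0 \/ N + 1 = 0.
  move: H3; rewrite w3E -!mulrA => /eqP.
  rewrite !mulf_eq0 oppr_eq0 (negbTE h2) !(negbTE hM) !(negbTE hN) /= !orbA !orbb -!orbA.
  by case/or4P => /eqP; tauto.
have cM : N - M = 0 \/ N - 2%:R * M = 0 \/ 2%:R * N - M = 0 \/ N + M = 0.
  move: H9; rewrite w9E -!mulrA => /eqP.
  rewrite !mulf_eq0 oppr_eq0 (negbTE h2) !(negbTE hN) /= !orbA !orbb -!orbA.
  by case/or4P => /eqP; tauto.
have lin (a b c k1 k2 : F) : a = 0 -> b = 0 -> c = k1 * a + k2 * b -> c = 0.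
  by move=> -> -> ->; rewrite !mulr0 addr0.
have nz (k : F) : k != 0 -> k = 0 -> False by move=> /eqP.
have h4 : (2%:R : F) * 2%:R != 0 by rewrite mulf_neq0.
have eM2 : N - 2%:R * M = 0 -> M = 2%:R^-1 * N.
  move=> e; apply: (mulfI h2); rewrite mulrA mulfV // mul1r.
  by apply/eqP; rewrite eq_sym -subr_eq0 e.
have eM3 : 2%:R * N - M = 0 -> M = 2%:R * N.
  by move=> e; apply/eqP; rewrite eq_sym -subr_eq0 e.
have eM4 : N + M = 0 -> M = - N.
  by move=> e; apply/eqP; rewrite -addr_eq0 addrC e.
have eN3 : 2%:R * N - 1 = 0 -> N = 2%:R^-1.
  move=> e; apply: (mulfI h2); rewrite mulfV //.
  by apply/eqP; rewrite -subr_eq0 e.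
have eN2 : N - 2%:R = 0 -> N = 2%:R.
  by move=> e; apply/eqP; rewrite -subr_eq0 e.
have eN4 : N + 1 = 0 -> N = - 1.
  by move=> e; apply/eqP; rewrite -addr_eq0 e.
case: cN => [hN1|[hN2|[hN3|hN4]]].
- case: cM => [e|[e|[e|e]]].
  + do 3 right; left; split; last by left.
    apply: (lin _ _ _ 1 (-1) hN1 e); ring.
  + do 4 right; split => //.
    right; right; apply: (lin _ _ _ 1 (-1) hN1 e); ring.
  + do 4 right; split => //.
    right; left; apply: (lin _ _ _ 2%:R (-1) hN1 e); ring.
  + do 4 right; split => //.
    left; apply: (lin _ _ _ (-1) 1 hN1 e); ring.
- case: cM => [e|[e|[e|e]]].
  + left; split => //; apply: (lin _ _ _ 1 (-1) hN2 e); ring.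
  + do 3 right; left; split; last by right; left.
    apply: (lin _ _ _ (2%:R^-1) (- 2%:R^-1) hN2 e); field; by rewrite h2.
  + exfalso; move: H5; rewrite (eM3 e) (eN2 hN2) => /eqP; apply/negP.
    have -> : w5 (2%:R * 2%:R) (2%:R : F) = 2%:R ^+ 14 * 3%:R ^+ 4 * 5%:R by rewrite /w5; ring.
    by rewrite !mulf_neq0 ?expf_neq0.
  + exfalso; move: H5; rewrite (eM4 e) (eN2 hN2) => /eqP; apply/negP.
    have -> : w5 (- 2%:R) (2%:R : F) = 2%:R ^+ 11 * 3%:R ^+ 4 * 5%:R by rewrite /w5; ring.
    by rewrite !mulf_neq0 ?expf_neq0.
- case: cM => [e|[e|[e|e]]].
  + do 2 right; left; split => //; apply: (lin _ _ _ 1 (-2%:R) hN3 e); ring.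
  + exfalso; have eN : N = 2%:R * M by apply/eqP; rewrite -subr_eq0 e.
    have hz : 4%:R * M = 1.
      by apply/eqP; rewrite -subr_eq0; apply/eqP; apply: (lin _ _ _ 1 (-2%:R) hN3 e); ring.
    move: H6; rewrite eN => H6.
    have : 4%:R ^+ 15 * w6 M (2%:R * M) = - 832%:R * 4%:R ^+ 6 * (4%:R * M) ^+ 9 + 5184%:R * 4%:R ^+ 5 * (4%:R * M) ^+ 10 - 7872%:R * 4%:R ^+ 4 * (4%:R * M) ^+ 11 + 8640%:R * 4%:R ^+ 3 * (4%:R * M) ^+ 12 - 23808%:R * 4%:R ^+ 2 * (4%:R * M) ^+ 13 + 20736%:R * 4%:R ^+ 1 * (4%:R * M) ^+ 14 - 2048%:R * (4%:R * M) ^+ 15 by rewrite /w6; ring.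
    rewrite H6 mulr0 hz => /esym/eqP; apply/negP.
    have -> : (- 832%:R * 4%:R ^+ 6 * (1) ^+ 9 + 5184%:R * 4%:R ^+ 5 * (1) ^+ 10 - 7872%:R * 4%:R ^+ 4 * (1) ^+ 11 + 8640%:R * 4%:R ^+ 3 * (1) ^+ 12 - 23808%:R * 4%:R ^+ 2 * (1) ^+ 13 + 20736%:R * 4%:R ^+ 1 * (1) ^+ 14 - 2048%:R * (1) ^+ 15 : F) = 2%:R ^+ 10 * 3%:R ^+ 3 * 5%:R ^+ 1 by ring.
    by rewrite ?oppr_eq0 !mulf_neq0 ?expf_neq0.
  + do 3 right; left; split; last by right; right; left.
    apply: (lin _ _ _ 1 (-1) hN3 e); ring.
  + exfalso; have eM := eM4 e.
    have hz : 2%:R * N = 1 by apply/eqP; rewrite -subr_eq0 hN3.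
    move: H6; rewrite eM => H6.
    have : 2%:R ^+ 15 * w6 (- N) N = - 356%:R * 2%:R ^+ 6 * (2%:R * N) ^+ 9 + 648%:R * 2%:R ^+ 5 * (2%:R * N) ^+ 10 + 204%:R * 2%:R ^+ 4 * (2%:R * N) ^+ 11 - 540%:R * 2%:R ^+ 3 * (2%:R * N) ^+ 12 + 156%:R * 2%:R ^+ 2 * (2%:R * N) ^+ 13 - 108%:R * 2%:R ^+ 1 * (2%:R * N) ^+ 14 - 4%:R * (2%:R * N) ^+ 15 by rewrite /w6; ring.
    rewrite H6 mulr0 hz => /esym/eqP; apply/negP.
    have -> : (- 356%:R * 2%:R ^+ 6 * (1) ^+ 9 + 648%:R * 2%:R ^+ 5 * (1) ^+ 10 + 204%:R * 2%:R ^+ 4 * (1) ^+ 11 - 540%:R * 2%:R ^+ 3 * (1) ^+ 12 + 156%:R * 2%:R ^+ 2 * (1) ^+ 13 - 108%:R * 2%:R ^+ 1 * (1) ^+ 14 - 4%:R * (1) ^+ 15 : F) = - (2%:R ^+ 2 * 3%:R ^+ 3 * 5%:R ^+ 2) by ring.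
    by rewrite ?oppr_eq0 !mulf_neq0 ?expf_neq0.
- case: cM => [e|[e|[e|e]]].
  + right; left; split => //; apply: (lin _ _ _ 1 (-1) hN4 e); ring.
  + exfalso; have eN : N = 2%:R * M by apply/eqP; rewrite -subr_eq0 e.
    have hz : 2%:R * M = - 1.
      by apply/eqP; rewrite -subr_eq0 opprK; apply/eqP; apply: (lin _ _ _ 1 (-1) hN4 e); ring.
    move: H6; rewrite eN => H6.
    have : 2%:R ^+ 15 * w6 M (2%:R * M) = - 832%:R * 2%:R ^+ 6 * (2%:R * M) ^+ 9 + 5184%:R * 2%:R ^+ 5 * (2%:R * M) ^+ 10 - 7872%:R * 2%:R ^+ 4 * (2%:R * M) ^+ 11 + 8640%:R * 2%:R ^+ 3 * (2%:R * M) ^+ 12 - 23808%:R * 2%:R ^+ 2 * (2%:R * M) ^+ 13 + 20736%:R * 2%:R ^+ 1 * (2%:R * M) ^+ 14 - 2048%:R * (2%:R * M) ^+ 15 by rewrite /w6; ring.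
    rewrite H6 mulr0 hz => /esym/eqP; apply/negP.
    have -> : (- 832%:R * 2%:R ^+ 6 * (- 1) ^+ 9 + 5184%:R * 2%:R ^+ 5 * (- 1) ^+ 10 - 7872%:R * 2%:R ^+ 4 * (- 1) ^+ 11 + 8640%:R * 2%:R ^+ 3 * (- 1) ^+ 12 - 23808%:R * 2%:R ^+ 2 * (- 1) ^+ 13 + 20736%:R * 2%:R ^+ 1 * (- 1) ^+ 14 - 2048%:R * (- 1) ^+ 15 : F) = 2%:R ^+ 12 * 3%:R ^+ 3 * 5%:R ^+ 1 by ring.
    by rewrite ?oppr_eq0 !mulf_neq0 ?expf_neq0.
  + exfalso; move: H6; rewrite (eM3 e) (eN4 hN4) => /eqP; apply/negP.
    have -> : w6 (2%:R * - 1) (- 1 : F) = - (2%:R ^+ 5 * 3%:R ^+ 3 * 5%:R).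
      by rewrite /w6; ring.
    by rewrite oppr_eq0 !mulf_neq0 ?expf_neq0.
  + do 3 right; left; split; last by right; right; right.
    apply: (lin _ _ _ (-1) 1 hN4 e); ring.
Qed.

Definition Ws (F : fieldType) (M N t : F) : F :=
  w3 M N + w4 M N * t + w5 M N * t ^+ 2 + w6 M N * t ^+ 3 + w7 M N * t ^+ 4
  + w8 M N * t ^+ 5 + w9 M N * t ^+ 6.

Lemma NT1alg (F : fieldType) (M N t : F) : 2%:R != 0 :> F -> adisj M N -> Ws M N t = 0.
Proof.
move=> h2.
have s0 (u v : F) : u - v = 0 -> u = v by move=> e; apply/eqP; rewrite -subr_eq0 e.
have a0 (u v : F) : u + v = 0 -> u = - v by move=> e; apply/eqP; rewrite -addr_eq0 e.
have ws := (Ws, w3, w4, w5, w6, w7, w8, w9).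
case=> [[a b]|[[a b]|[[a b]|[[a b]|[a b]]]]].
- by rewrite (s0 _ _ a) (s0 _ _ b) /Ws /w3 /w4 /w5 /w6 /w7 /w8 /w9; ring.
- by rewrite (a0 _ _ a) (a0 _ _ b) /Ws /w3 /w4 /w5 /w6 /w7 /w8 /w9; ring.
- have eM : M = N.
    apply: s0; have : 2%:R * (M - N) = (2%:R * M - 1) - (2%:R * N - 1) by ring.
    by rewrite a b subrr => /eqP; rewrite mulf_eq0 (negbTE h2) /= => /eqP.
  have hz : 2%:R * N = 1 by apply: s0.
  rewrite eM.
    have : 2%:R ^+ 15 * Ws N N t = 4%:R * 2%:R ^+ 6 * (2%:R * N) ^+ 9 - 18%:R * 2%:R ^+ 5 * (2%:R * N) ^+ 10 + 24%:R * 2%:R ^+ 4 * (2%:R * N) ^+ 11 - 24%:R * 2%:R ^+ 2 * (2%:R * N) ^+ 13 + 18%:R * 2%:R ^+ 1 * (2%:R * N) ^+ 14 - 4%:R * (2%:R * N) ^+ 15 - 6%:R * 2%:R ^+ 6 * (2%:R * N) ^+ 9 * t ^+ 1 + 27%:R * 2%:R ^+ 5 * (2%:R * N) ^+ 10 * t ^+ 1 - 36%:R * 2%:R ^+ 4 * (2%:R * N) ^+ 11 * t ^+ 1 + 36%:R * 2%:R ^+ 2 * (2%:R * N) ^+ 13 * t ^+ 1 - 27%:R * 2%:R ^+ 1 * (2%:R * N) ^+ 14 * t ^+ 1 + 6%:R * (2%:R * N) ^+ 15 * t ^+ 1 - 6%:R * 2%:R ^+ 6 * (2%:R * N) ^+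 9 * t ^+ 2 + 27%:R * 2%:R ^+ 5 * (2%:R * N) ^+ 10 * t ^+ 2 - 36%:R * 2%:R ^+ 4 * (2%:R * N) ^+ 11 * t ^+ 2 + 36%:R * 2%:R ^+ 2 * (2%:R * N) ^+ 13 * t ^+ 2 - 27%:R * 2%:R ^+ 1 * (2%:R * N) ^+ 14 * t ^+ 2 + 6%:R * (2%:R * N) ^+ 15 * t ^+ 2 + 4%:R * 2%:R ^+ 6 * (2%:R * N) ^+ 9 * t ^+ 3 - 18%:R * 2%:R ^+ 5 * (2%:R * N) ^+ 10 * t ^+ 3 + 24%:R * 2%:R ^+ 4 * (2%:R * N) ^+ 11 * t ^+ 3 - 24%:R * 2%:R ^+ 2 * (2%:R * N) ^+ 13 * t ^+ 3 + 18%:R * 2%:R ^+ 1 * (2%:R * N) ^+ 14 * t ^+ 3 - 4%:R * (2%:R * N) ^+ 15 * t ^+ 3 by rewrite /Ws /w3 /w4 /w5 /w6 /w7 /w8 /w9; ring.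
    rewrite hz => HH.
    have : (2%:R ^+ 15 : F) * Ws N N t = 0 by rewrite HH; ring.
    by move/eqP; rewrite mulf_eq0 expf_eq0 (negbTE h2) andbF /= => /eqP.
- rewrite (s0 _ _ a).
  case: b => [b|[b|[b|b]]].
  + by rewrite (s0 _ _ b) /Ws /w3 /w4 /w5 /w6 /w7 /w8 /w9; ring.
  + by rewrite (s0 _ _ b) /Ws /w3 /w4 /w5 /w6 /w7 /w8 /w9; ring.
  + have hz : 2%:R * N = 1 by apply: s0.
      have : 2%:R ^+ 9 * Ws 1 N t = 4%:R * 2%:R ^+ 6 * (2%:R * N) ^+ 3 - 18%:R * 2%:R ^+ 5 * (2%:R * N) ^+ 4 + 24%:R * 2%:R ^+ 4 * (2%:R * N) ^+ 5 - 24%:R * 2%:R ^+ 2 * (2%:R * N) ^+ 7 + 18%:R * 2%:R ^+ 1 * (2%:R * N) ^+ 8 - 4%:R * (2%:R * N) ^+ 9 - 24%:R * 2%:R ^+ 6 * (2%:R * N) ^+ 3 * t ^+ 1 + 108%:R * 2%:R ^+ 5 * (2%:R * N) ^+ 4 * t ^+ 1 - 144%:R * 2%:R ^+ 4 * (2%:R * N) ^+ 5 * t ^+ 1 + 144%:R * 2%:R ^+ 2 * (2%:R * N) ^+ 7 * t ^+ 1 - 108%:R * 2%:R ^+ 1 * (2%:R * N) ^+ 8 * t ^+ 1 + 24%:R * (2%:R * N) ^+ 9 * t ^+ 1 + 60%:R * 2%:R ^+ 6 * (2%:R * N) ^+ 3 * t ^+ 2 - 270%:R * 2%:R ^+ 5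 * (2%:R * N) ^+ 4 * t ^+ 2 + 360%:R * 2%:R ^+ 4 * (2%:R * N) ^+ 5 * t ^+ 2 - 360%:R * 2%:R ^+ 2 * (2%:R * N) ^+ 7 * t ^+ 2 + 270%:R * 2%:R ^+ 1 * (2%:R * N) ^+ 8 * t ^+ 2 - 60%:R * (2%:R * N) ^+ 9 * t ^+ 2 - 80%:R * 2%:R ^+ 6 * (2%:R * N) ^+ 3 * t ^+ 3 + 360%:R * 2%:R ^+ 5 * (2%:R * N) ^+ 4 * t ^+ 3 - 480%:R * 2%:R ^+ 4 * (2%:R * N) ^+ 5 * t ^+ 3 + 480%:R * 2%:R ^+ 2 * (2%:R * N) ^+ 7 * t ^+ 3 - 360%:R * 2%:R ^+ 1 * (2%:R * N) ^+ 8 * t ^+ 3 + 80%:R * (2%:R * N) ^+ 9 * t ^+ 3 + 60%:R * 2%:R ^+ 6 * (2%:R * N) ^+ 3 * t ^+ 4 - 270%:R * 2%:R ^+ 5 * (2%:R * N) ^+ 4 * t ^+ 4 + 360%:R * 2%:R ^+ 4 * (2%:R * N) ^+ 5 * t ^+ 4 - 360%:R * 2%:R ^+ 2 * (2%:R * N) ^+ 7 * t ^+ 4 + 270%:R * 2%:R ^+ 1 * (2%:R * N) ^+ 8 * t ^+ 4 - 60%:R * (2%:R * N) ^+ 9 * t ^+ 4 - 24%:R * 2%:R ^+ 6 * (2%:R * N) ^+ 3 * t ^+ 5 + 108%:R * 2%:R ^+ 5 * (2%:R * N) ^+ 4 * t ^+ 5 - 144%:R * 2%:R ^+ 4 * (2%:R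 * N) ^+ 5 * t ^+ 5 + 144%:R * 2%:R ^+ 2 * (2%:R * N) ^+ 7 * t ^+ 5 - 108%:R * 2%:R ^+ 1 * (2%:R * N) ^+ 8 * t ^+ 5 + 24%:R * (2%:R * N) ^+ 9 * t ^+ 5 + 4%:R * 2%:R ^+ 6 * (2%:R * N) ^+ 3 * t ^+ 6 - 18%:R * 2%:R ^+ 5 * (2%:R * N) ^+ 4 * t ^+ 6 + 24%:R * 2%:R ^+ 4 * (2%:R * N) ^+ 5 * t ^+ 6 - 24%:R * 2%:R ^+ 2 * (2%:R * N) ^+ 7 * t ^+ 6 + 18%:R * 2%:R ^+ 1 * (2%:R * N) ^+ 8 * t ^+ 6 - 4%:R * (2%:R * N) ^+ 9 * t ^+ 6 by rewrite /Ws /w3 /w4 /w5 /w6 /w7 /w8 /w9; ring.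
      rewrite hz => HH.
      have : (2%:R ^+ 9 : F) * Ws 1 N t = 0 by rewrite HH; ring.
      by move/eqP; rewrite mulf_eq0 expf_eq0 (negbTE h2) andbF /= => /eqP.
  + by rewrite (a0 _ _ b) /Ws /w3 /w4 /w5 /w6 /w7 /w8 /w9; ring.
- rewrite (s0 _ _ a).
  case: b => [b|[b|b]].
  + by rewrite (a0 _ _ b) /Ws /w3 /w4 /w5 /w6 /w7 /w8 /w9; ring.
  + by rewrite (s0 _ _ b) /Ws /w3 /w4 /w5 /w6 /w7 /w8 /w9; ring.
  + have hz : 2%:R * M = 1 by apply: s0.
      have : 2%:R ^+ 6 * Ws M 1 t = - 4%:R * 2%:R ^+ 6 * t ^+ 6 + 18%:R * 2%:R ^+ 5 * (2%:R * M) ^+ 1 * t ^+ 6 - 24%:R * 2%:R ^+ 4 * (2%:R * M) ^+ 2 * t ^+ 6 + 24%:R * 2%:R ^+ 2 * (2%:R * M) ^+ 4 * t ^+ 6 - 18%:R * 2%:R ^+ 1 * (2%:R * M) ^+ 5 * t ^+ 6 + 4%:R * (2%:R * M) ^+ 6 * t ^+ 6 by rewrite /Ws /w3 /w4 /w5 /w6 /w7 /w8 /w9; ring.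
      rewrite hz => HH.
      have : (2%:R ^+ 6 : F) * Ws M 1 t = 0 by rewrite HH; ring.
      by move/eqP; rewrite mulf_eq0 expf_eq0 (negbTE h2) andbF /= => /eqP.
Qed.

Lemma disj_adisj (F : fieldType) p m n : p \in [pchar F] -> (2 < m)%N -> (m <= n)%N ->
  disj p m n <-> adisj (m%:R : F) (n%:R : F).
Proof.
move=> Hp m2 mn.
have pp := pcharf_prime Hp.
have n2 : (2 <= n)%N by lia.
have m2' : (2 <= m)%N by lia.
have d1 k : (1 <= k)%N -> (p %| k - 1)%N <-> (k%:R - 1 = 0 :> F).
  by move=> k1; rewrite (dv1 Hp k1); split => /eqP.
have d2 k : (2 <= k)%N -> (p %| k - 2)%N <-> (k%:R - 2%:R = 0 :> F).
  by move=> k1; rewrite (dv2 Hp k1); split => /eqP.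
have d3 k : (1 <= k)%N -> (p %| 2 * k - 1)%N <-> (2%:R * k%:R - 1 = 0 :> F).
  by move=> k1; rewrite (dv3 Hp k1); split => /eqP.
have d4 k : (p %| k + 1)%N <-> (k%:R + 1 = 0 :> F).
  by rewrite (dv4 _ Hp); split => /eqP.
have n1 : (1 <= n)%N by lia.
have m1 : (1 <= m)%N by lia.
rewrite /disj /adisj !(Euclid_dvdM _ _ pp).
split.
- case=> [[a b]|[[a b]|[[a b]|[[a b]|[a b]]]]].
  + by left; split; [apply/d2|apply/d2].
  + by right; left; split; [apply/d4|apply/d4].
  + by do 2 right; left; split; [apply/d3|apply/d3].
  + do 3 right; left; split; first by apply/d1.
    case/orP: b => [/orP[/orP[b|b]|b]|b].
    * by left; apply/d1.
    * by right; left; apply/d2.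
    * by right; right; left; apply/d3.
    * by right; right; right; apply/d4.
  + do 4 right; split; first by apply/d1.
    case/orP: b => [/orP[b|b]|b].
    * by left; apply/d4.
    * by right; left; apply/d2.
    * by right; right; apply/d3.
- case=> [[a b]|[[a b]|[[a b]|[[a b]|[a b]]]]].
  + by left; split; [apply/d2|apply/d2].
  + by right; left; split; [apply/d4|apply/d4].
  + by do 2 right; left; split; [apply/d3|apply/d3].
  + do 3 right; left; split; first by apply/d1.
    case: b => [b|[b|[b|b]]].
    * by rewrite (introT idP (proj2 (d1 _ n1) b)).
    * by rewrite (introT idP (proj2 (d2 _ n2) b)) orbT.
    * by rewrite (introT idP (proj2 (d3 _ n1) b)) orbT.
    * by rewrite (introT idP (proj2 (d4 _) b)) orbT.
  + do 4 right; split; first by apply/d1.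
    case: b => [b|[b|b]].
    * by rewrite (introT idP (proj2 (d4 _) b)).
    * by rewrite (introT idP (proj2 (d2 _ m2') b)) orbT.
    * by rewrite (introT idP (proj2 (d3 _ m1) b)) orbT.
Qed.
Lemma transc (L : closedFieldType) (K : fieldType) (iota : {rmorphism L -> K}) (x : K)
  (Htr : forall P : {poly L}, P != 0 -> (map_poly iota P).[x] != 0)
  (a : L) (n : nat) (c : nat -> L) (k : nat) :
  a != 0 -> (0 < n)%N ->
  \sum_(i < k) iota (c i) * (iota a * x ^+ n) ^+ i = 0 -> forall i, (i < k)%N -> c i = 0.
Proof.
move=> a0 n0 Hs i ik.
pose Q : {poly L} := \sum_(j < k) (c j * a ^+ j) *: 'X^(n * j).
have HQ : (map_poly iota Q).[x] = \sum_(j < k) iota (c j) * (iota a * x ^+ n) ^+ j.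
  rewrite rmorph_sum horner_sum; apply: eq_bigr => j _.
  rewrite /= map_polyZ map_polyXn hornerZ hornerXn rmorphM rmorphXn exprMn exprM; ring.
have Q0 : Q = 0.
  by apply/eqP; apply: contraT => /Htr; rewrite HQ Hs eqxx.
have : Q`_(n * i) = c i * a ^+ i.
  rewrite /Q coef_sum (bigD1 (Ordinal ik)) //= big1 ?addr0.
    by rewrite coefZ coefXn eqxx mulr1.
  move=> j /negbTE hj; rewrite coefZ coefXn.
  rewrite eqn_pmul2l // (_ : (i == j) = false) ?mulr0 //.
  by apply/negbTE; apply: contraFN hj => /eqP e; apply/eqP/val_inj; rewrite /= e.
rewrite Q0 coef0 => /esym/eqP; rewrite mulf_eq0 expf_eq0 (negbTE a0) andbF orbF.
by move/eqP.
Qed.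


Lemma Wt_id (K : fieldType) (M N t : K) :
  40%:R * f3 M N t ^+ 3 - 45%:R * f2 M N t * f3 M N t * f4 M N t
  + 9%:R * f2 M N t ^+ 2 * f5 M N t = t ^+ 3 * Ws M N t.
Proof. rewrite /f2 /f3 /f4 /f5 /P5 /Ws /w3 /w4 /w5 /w6 /w7 /w8 /w9. ring. Qed.

Lemma fact_nz (F : fieldType) p k : p \in [pchar F] -> (k < p)%N -> k`!%:R != 0 :> F.
Proof.
move=> Hp; elim: k => [|k IH] kp; first by rewrite fact0 oner_neq0.
by rewrite factS natrM mulf_neq0 ?IH ?(ltnW kp) // (nzsmall Hp).
Qed.

Ltac pushm := rewrite ?(rmorphB, rmorphD, rmorphN, rmorphM, rmorphXn, rmorph_nat, rmorph1, rmorph0).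

Definition pe (R : comRingType) (l : seq (int * nat * nat)) (M N : R) : R :=
  \sum_(e <- l) (e.1.1)%:~R * M ^+ e.1.2 * N ^+ e.2.

Lemma pe_morph (R S : comRingType) (f : {rmorphism R -> S}) l (u v : R) :
  f (pe l u v) = pe l (f u) (f v).
Proof.
rewrite /pe rmorph_sum; apply: eq_bigr => e _.
by rewrite !rmorphM !rmorphXn rmorph_int.
Qed.

Definition l3 : seq (int * nat * nat) := [:: (4%Z, 6%N, 3%N); ((-18)%Z, 6%N, 4%N); (24%Z, 6%N, 5%N); ((-24)%Z, 6%N, 7%N); (18%Z, 6%N, 8%N); ((-4)%Z, 6%N, 9%N)].
Lemma w3_pe (R : comRingType) (u v : R) : w3 u v = pe l3 u v.
Proof. rewrite /w3 /pe /l3 !big_cons big_nil /=. ring. Qed.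
Lemma iota_w3 (L : closedFieldType) (K : fieldType) (iota : {rmorphism L -> K}) (u v : L) :
  iota (w3 u v) = w3 (iota u) (iota v).
Proof. by rewrite !w3_pe pe_morph. Qed.

Definition l4 : seq (int * nat * nat) := [:: (18%Z, 5%N, 4%N); ((-63)%Z, 5%N, 5%N); (45%Z, 5%N, 6%N); (45%Z, 5%N, 7%N); ((-63)%Z, 5%N, 8%N); (18%Z, 5%N, 9%N); ((-24)%Z, 6%N, 3%N); (90%Z, 6%N, 4%N); ((-81)%Z, 6%N, 5%N); ((-45)%Z, 6%N, 6%N); (99%Z, 6%N, 7%N); ((-45)%Z, 6%N, 8%N); (6%Z, 6%N, 9%N)].
Lemma w4_pe (R : comRingType) (u v : R) : w4 u v = pe l4 u v.
Proof. rewrite /w4 /pe /l4 !big_cons big_nil /=. ring. Qed.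
Lemma iota_w4 (L : closedFieldType) (K : fieldType) (iota : {rmorphism L -> K}) (u v : L) :
  iota (w4 u v) = w4 (iota u) (iota v).
Proof. by rewrite !w4_pe pe_morph. Qed.

Definition l5 : seq (int * nat * nat) := [:: (24%Z, 4%N, 5%N); ((-45)%Z, 4%N, 6%N); ((-30)%Z, 4%N, 7%N); (45%Z, 4%N, 8%N); (6%Z, 4%N, 9%N); ((-90)%Z, 5%N, 4%N); (252%Z, 5%N, 5%N); ((-90)%Z, 5%N, 6%N); ((-180)%Z, 5%N, 7%N); (180%Z, 5%N, 8%N); ((-72)%Z, 5%N, 9%N); (60%Z, 6%N, 3%N); ((-180)%Z, 6%N, 4%N); (84%Z, 6%N, 5%N); (135%Z, 6%N, 6%N); ((-150)%Z, 6%N, 7%N); (45%Z, 6%N, 8%N); (6%Z, 6%N, 9%N)].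
Lemma w5_pe (R : comRingType) (u v : R) : w5 u v = pe l5 u v.
Proof. rewrite /w5 /pe /l5 !big_cons big_nil /=. ring. Qed.
Lemma iota_w5 (L : closedFieldType) (K : fieldType) (iota : {rmorphism L -> K}) (u v : L) :
  iota (w5 u v) = w5 (iota u) (iota v).
Proof. by rewrite !w5_pe pe_morph. Qed.

Definition l6 : seq (int * nat * nat) := [:: (45%Z, 3%N, 7%N); ((-90)%Z, 3%N, 8%N); (45%Z, 3%N, 9%N); ((-96)%Z, 4%N, 5%N); (135%Z, 4%N, 6%N); (120%Z, 4%N, 7%N); ((-135)%Z, 4%N, 8%N); ((-24)%Z, 4%N, 9%N); (180%Z, 5%N, 4%N); ((-378)%Z, 5%N, 5%N); (225%Z, 5%N, 7%N); ((-90)%Z, 5%N, 8%N); (63%Z, 5%N, 9%N); ((-80)%Z, 6%N, 3%N); (180%Z, 6%N, 4%N); ((-6)%Z, 6%N, 5%N); ((-135)%Z, 6%N, 6%N); (90%Z, 6%N, 7%N); ((-45)%Z, 6%N, 8%N); ((-4)%Z, 6%N, 9%N)].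
Lemma w6_pe (R : comRingType) (u v : R) : w6 u v = pe l6 u v.
Proof. rewrite /w6 /pe /l6 !big_cons big_nil /=. ring. Qed.
Lemma iota_w6 (L : closedFieldType) (K : fieldType) (iota : {rmorphism L -> K}) (u v : L) :
  iota (w6 u v) = w6 (iota u) (iota v).
Proof. by rewrite !w6_pe pe_morph. Qed.

Definition l7 : seq (int * nat * nat) := [:: ((-24)%Z, 2%N, 7%N); (63%Z, 2%N, 8%N); ((-39)%Z, 2%N, 9%N); ((-90)%Z, 3%N, 7%N); (135%Z, 3%N, 8%N); ((-45)%Z, 3%N, 9%N); (144%Z, 4%N, 5%N); ((-135)%Z, 4%N, 6%N); ((-150)%Z, 4%N, 7%N); (90%Z, 4%N, 8%N); (51%Z, 4%N, 9%N); ((-180)%Z, 5%N, 4%N); (252%Z, 5%N, 5%N); (90%Z, 5%N, 6%N); ((-90)%Z, 5%N, 7%N); ((-45)%Z, 5%N, 8%N); ((-27)%Z, 5%N, 9%N); (60%Z, 6%N, 3%N); ((-90)%Z, 6%N, 4%N); ((-36)%Z, 6%N, 5%N); (45%Z, 6%N, 6%N); ((-6)%Z, 6%N, 7%N); (27%Z, 6%N, 8%N)].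
Lemma w7_pe (R : comRingType) (u v : R) : w7 u v = pe l7 u v.
Proof. rewrite /w7 /pe /l7 !big_cons big_nil /=. ring. Qed.
Lemma iota_w7 (L : closedFieldType) (K : fieldType) (iota : {rmorphism L -> K}) (u v : L) :
  iota (w7 u v) = w7 (iota u) (iota v).
Proof. by rewrite !w7_pe pe_morph. Qed.

Definition l8 : seq (int * nat * nat) := [:: ((-18)%Z, 1%N, 8%N); (18%Z, 1%N, 9%N); (48%Z, 2%N, 7%N); ((-63)%Z, 2%N, 8%N); (15%Z, 2%N, 9%N); (45%Z, 3%N, 7%N); ((-45)%Z, 3%N, 8%N); ((-96)%Z, 4%N, 5%N); (45%Z, 4%N, 6%N); (60%Z, 4%N, 7%N); ((-9)%Z, 4%N, 9%N); (90%Z, 5%N, 4%N); ((-63)%Z, 5%N, 5%N); ((-45)%Z, 5%N, 6%N); (18%Z, 5%N, 8%N); ((-24)%Z, 6%N, 3%N); (18%Z, 6%N, 4%N); (15%Z, 6%N, 5%N); ((-9)%Z, 6%N, 7%N)].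
Lemma w8_pe (R : comRingType) (u v : R) : w8 u v = pe l8 u v.
Proof. rewrite /w8 /pe /l8 !big_cons big_nil /=. ring. Qed.
Lemma iota_w8 (L : closedFieldType) (K : fieldType) (iota : {rmorphism L -> K}) (u v : L) :
  iota (w8 u v) = w8 (iota u) (iota v).
Proof. by rewrite !w8_pe pe_morph. Qed.

Definition l9 : seq (int * nat * nat) := [:: ((-4)%Z, 0%N, 9%N); (18%Z, 1%N, 8%N); ((-24)%Z, 2%N, 7%N); (24%Z, 4%N, 5%N); ((-18)%Z, 5%N, 4%N); (4%Z, 6%N, 3%N)].
Lemma w9_pe (R : comRingType) (u v : R) : w9 u v = pe l9 u v.
Proof. rewrite /w9 /pe /l9 !big_cons big_nil /=. ring. Qed.
Lemma iota_w9 (L : closedFieldType) (K : fieldType) (iota : {rmorphism L -> K}) (u v : L) :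
  iota (w9 u v) = w9 (iota u) (iota v).
Proof. by rewrite !w9_pe pe_morph. Qed.

Lemma iota_Ws (L : closedFieldType) (K : fieldType) (iota : {rmorphism L -> K}) (u v : L) (t : K) :
  Ws (iota u) (iota v) t =
  \sum_(i < 7) iota (nth 0 [:: w3 u v; w4 u v; w5 u v; w6 u v; w7 u v; w8 u v; w9 u v] i) * t ^+ i.
Proof.
rewrite !big_ord_recr big_ord0 /= iota_w3 iota_w4 iota_w5 iota_w6 iota_w7 iota_w8 iota_w9 /Ws.
rewrite expr0 expr1 !mulr1 add0r.
set a3 := w3 _ _; set a4 := w4 _ _; set a5 := w5 _ _; set a6 := w6 _ _; set a7 := w7 _ _; set a8 := w8 _ _; set a9 := w9 _ _.
ring.
Qed.
Lemma chain L K iota x D (HD : @is_hasse_deriv L K iota x D) (a b : L) (m n : nat) (y : K) :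
  (0 < m)%N -> (0 < n)%N -> iota a * x ^+ n + iota b * y ^+ m = 1 ->
  [/\ Af x (1 - iota a * x ^+ n) m%:R 2 * D 2 y = y * f2 m%:R n%:R (iota a * x ^+ n),
      Af x (1 - iota a * x ^+ n) m%:R 3 * D 3 y = y * f3 m%:R n%:R (iota a * x ^+ n),
      Af x (1 - iota a * x ^+ n) m%:R 4 * D 4 y = y * f4 m%:R n%:R (iota a * x ^+ n) &
      Af x (1 - iota a * x ^+ n) m%:R 5 * D 5 y = y * f5 m%:R n%:R (iota a * x ^+ n)].
Proof.
move=> m0 n0 rel.
have Hxt := dt_x HD a n0.
have HF2 := F2 HD m0 n0 rel.
move: Hxt HF2; set t := iota a * x ^+ n => Hxt HF2.
have [H0 _] := HD.
have E0 : Af x (1 - t) m%:R 0 * D 0%N y = y * 1.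
  by rewrite /Af H0 /= !expr0 !mul1r mulr1.
have E1 : Af x (1 - t) m%:R 1 * D 1%N y = y * f1 m%:R n%:R t.
  apply: (step (fk' := 0) HD Hxt HF2 E0); first by rewrite (d1 HD) mul0r.
  rewrite /f1 /P5; ring.
have E2 : Af x (1 - t) m%:R 2 * D 2 y = y * f2 m%:R n%:R t.
  apply: (step HD Hxt HF2 E1 (Hf1 HD m n t)).
  rewrite /f1 /f1' /f2 /P5 /P5'; ring.
have E3 : Af x (1 - t) m%:R 3 * D 3 y = y * f3 m%:R n%:R t.
  apply: (step HD Hxt HF2 E2 (Hf2 HD m n t)).
  rewrite /f2 /f2' /f3 /P5 /P5'; ring.
have E4 : Af x (1 - t) m%:R 4 * D 4 y = y * f4 m%:R n%:R t.
  apply: (step HD Hxt HF2 E3 (Hf3 HD m n t)).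
  rewrite /f3 /f3' /f4 /P5 /P5'; ring.
have E5 : Af x (1 - t) m%:R 5 * D 5 y = y * f5 m%:R n%:R t.
  apply: (step HD Hxt HF2 E4 (Hf4 HD m n t)).
  rewrite /f4 /f4' /f5 /P5 /P5'; ring.
by split.
Qed.


Lemma notnegb (b : bool) : (~ ~~ b) <-> b.
Proof. by case: b; split. Qed.

Lemma main_core (p : nat) (L : closedFieldType) (K : fieldType)
  (iota : {rmorphism L -> K}) (a b : L) (m n : nat) (x y : K)
  (D : nat -> K -> K) :
  prime p -> (5 < p)%N -> p \in [pchar L] ->
  a != 0 -> b != 0 ->
  (2 < m)%N -> (m <= n)%N -> ~~ (p %| m * n)%N ->
  is_function_field_ab iota a b m n x y ->
  is_hasse_deriv iota x D ->
  (nonclassical_conics D x y <-> disj p m n).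
Proof.
move=> pp p5 HpL a0 b0 m2 mn pmn [Htr rel _] HD.
have HpK : p \in [pchar K] := rmorph_pchar iota HpL.
have m0 : (0 < m)%N by lia.
have n0 : (0 < n)%N by lia.
move: pmn; rewrite Euclid_dvdM // negb_or => /andP [pm pn].
have hMK : (m%:R : K) != 0 by rewrite -(dvdn_pcharf HpK).
have hNK : (n%:R : K) != 0 by rewrite -(dvdn_pcharf HpK).
have hML : (m%:R : L) != 0 by rewrite -(dvdn_pcharf HpL).
have hNL : (n%:R : L) != 0 by rewrite -(dvdn_pcharf HpL).
have nzK k : (0 < k)%N -> (k <= 5)%N -> (k%:R : K) != 0.
  by move=> k0 k5; apply: (nzsmall HpK) => //; lia.
have nzL k : (0 < k)%N -> (k <= 5)%N -> (k%:R : L) != 0.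
  by move=> k0 k5; apply: (nzsmall HpL) => //; lia.
have [E2 E3 E4 E5] := chain HD m0 n0 rel.
have hx : x != 0.
  by have := Htr 'X; rewrite map_polyX hornerX polyX_eq0; apply.
move: E2 E3 E4 E5; set t := iota a * x ^+ n => E2 E3 E4 E5.
have hs : 1 - t != 0.
  have := Htr (1 - a *: 'X^n).
  rewrite rmorphB rmorph1 /= map_polyZ map_polyXn !hornerE; apply.
  apply/eqP => P0; have := congr1 (fun q : {poly L} => q`_0) P0.
  rewrite coefB coef1 coefZ coefXn coef0 (_ : (0%N == n) = false) ?mulr0 ?subr0 => [/eqP|]; last by lia.
  by rewrite oner_eq0.
have ht : t != 0 by rewrite mulf_neq0 ?fmorph_eq0 ?expf_neq0.
have hy : y != 0.
  apply: contraNneq hs => y0; rewrite -rel y0 expr0n.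
  case: m m0 {m2 mn pm hMK hML E2 E3 E4 E5 rel} => // m _ /=.
  by rewrite mulr0 addr0 /t subrr.
have hA k : (k <= 5)%N -> Af x (1 - t) m%:R k != 0.
  move=> k5; rewrite /Af; apply: mulf_neq0; last by apply: (fact_nz HpK); apply: leq_ltn_trans k5 p5.
  by apply: mulf_neq0; [apply: mulf_neq0|]; apply: expf_neq0.
rewrite /nonclassical_conics classical_iff (wdet_val HD y).
apply: (iff_trans (notnegb _)).
set B := 2%:R * D 3 y ^+ 3 - 3%:R * D 2 y * D 3 y * D 4 y + D 2 y ^+ 2 * D 5 y.
have K1 : (D 2 y == 0) = (f2 m%:R n%:R t == 0).
  apply/eqP/eqP => h.
    by move: E2; rewrite h mulr0 => /esym/eqP; rewrite mulf_eq0 (negbTE hy) => /eqP.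
  by apply: (mulfI (hA 2 isT)); rewrite E2 h !mulr0.
have K2 : (B == 0) = (Ws m%:R n%:R t == 0).
  have I : (2%:R ^+ 5 * 3%:R ^+ 3 * 5%:R) * (x ^+ 9 * (1 - t) ^+ 9 * (m%:R : K) ^+ 9) * B =
           y ^+ 3 * (t ^+ 3 * Ws m%:R n%:R t).
    rewrite -Wt_id.
    transitivity (40%:R * (y * f3 m%:R n%:R t) ^+ 3
        - 45%:R * (y * f2 m%:R n%:R t) * (y * f3 m%:R n%:R t) * (y * f4 m%:R n%:R t)
        + 9%:R * (y * f2 m%:R n%:R t) ^+ 2 * (y * f5 m%:R n%:R t)); last by ring.
    rewrite -E2 -E3 -E4 -E5 /Af /B !factS fact0; ring.
  have cG : (2%:R ^+ 5 * 3%:R ^+ 3 * 5%:R) * (x ^+ 9 * (1 - t) ^+ 9 * (m%:R : K) ^+ 9) != 0.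
    have n2 := nzK 2 isT isT; have n3 := nzK 3 isT isT; have n5 := nzK 5 isT isT.
    apply: mulf_neq0; (apply: mulf_neq0; [apply: mulf_neq0|]); try apply: expf_neq0; assumption.
  have yt : y ^+ 3 * t ^+ 3 != 0 by apply: mulf_neq0; apply: expf_neq0.
  apply/eqP/eqP => h.
    by move: I; rewrite h mulr0 => /esym/eqP; rewrite mulrA mulf_eq0 (negbTE yt) => /eqP.
  by apply: (mulfI cG); rewrite mulr0 I h !mulr0.
rewrite oppr_eq0 mulf_eq0 K1 K2.
have h2L := nzL 2 isT isT; have h3L := nzL 3 isT isT; have h5L := nzL 5 isT isT.
split.
- case/orP => /eqP HW.
  + have Hin : (m%:R * n%:R - m%:R * n%:R ^+ 2) + (n%:R ^+ 2 - m%:R * n%:R) * t = 0 :> K.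
      apply/eqP; move: HW => /eqP; apply: contraTT => Hn.
      rewrite (_ : f2 _ _ _ = t * ((m%:R * n%:R - m%:R * n%:R ^+ 2) + (n%:R ^+ 2 - m%:R * n%:R) * t)).
        by apply: mulf_neq0.
      by rewrite /f2 /P5; ring.
    have HS : \sum_(i < 2) iota (nth 0 [:: (m%:R * n%:R - m%:R * n%:R ^+ 2 : L); n%:R ^+ 2 - m%:R * n%:R] i) * t ^+ i = 0.
      apply: (etrans _ Hin); rewrite !big_ord_recr big_ord0 /=.
      rewrite ?rmorphB ?rmorphM ?rmorphXn ?rmorph_nat; ring.
    have Z := transc Htr a0 n0 HS.
    have c1 := Z 0%N isT; have c2 := Z 1%N isT; rewrite /= in c1 c2.
    have eN : (n%:R : L) = 1.
      move: c1 => /eqP; rewrite (_ : _ - _ = m%:R * n%:R * (1 - n%:R)); last by ring.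
      by rewrite !mulf_eq0 (negbTE hML) (negbTE hNL) /= subr_eq0 eq_sym => /eqP.
    have eM : (m%:R : L) = 1.
      move: c2 => /eqP; rewrite (_ : _ - _ = n%:R * (n%:R - m%:R)); last by ring.
      by rewrite !mulf_eq0 (negbTE hNL) /= subr_eq0 eN eq_sym => /eqP.
    apply/(disj_adisj HpL m2 mn).
    by do 3 right; left; rewrite eM eN subrr; split => //; left.
  + move: HW; rewrite -(rmorph_nat iota m) -(rmorph_nat iota n) iota_Ws => HS.
    have Z := transc Htr a0 n0 HS.
    apply/(disj_adisj HpL m2 mn).
    apply: NT2alg => //.
    * exact: (Z 0%N isT).
    * exact: (Z 6%N isT).
    * exact: (Z 2%N isT).
    * exact: (Z 3%N isT).
- move=> Hd; apply/orP; right; apply/eqP.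
  apply: NT1alg; first exact: (nzK 2 isT isT).
  exact/(disj_adisj HpK m2 mn).
Qed.

Unset Implicit Arguments. Set Strict Implicit.

Theorem theorem3p5 (p h : nat) (L : closedFieldType) (K : fieldType)
  (iota : {rmorphism L -> K}) (a b : L) (m n : nat) (x y : K)
  (D : nat -> K -> K) :
  prime p -> (5 < p)%N -> (0 < h)%N ->
  is_alg_closure_Fp p L ->
  a != 0 -> b != 0 -> a ^+ (p ^ h) = a -> b ^+ (p ^ h) = b ->
  (2 < m)%N -> (m <= n)%N -> ~~ (p %| m * n)%N ->
  is_function_field_ab iota a b m n x y ->
  is_hasse_deriv iota x D ->
  (nonclassical_conics D x y <->
   ((p %| m - 2)%N /\ (p %| n - 2)%N) \/
   ((p %| m + 1)%N /\ (p %| n + 1)%N) \/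
   ((p %| 2 * m - 1)%N /\ (p %| 2 * n - 1)%N) \/
   ((p %| m - 1)%N /\ (p %| (n - 1) * (n - 2) * (2 * n - 1) * (n + 1))%N) \/
   ((p %| n - 1)%N /\ (p %| (m + 1) * (m - 2) * (2 * m - 1))%N)).
Proof.
move=> pp p5 _ [HpL _] a0 b0 _ _ m2 mn pmn Hff HD.
exact: (@main_core p L K iota a b m n x y D pp p5 HpL a0 b0 m2 mn pmn Hff HD).
Qed.
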